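(* Let $\widehat{G}$ be a subgroup of $\widehat{\operatorname{PC}^{\bowtie}}$ containing ${\mathfrak S}_{\mathrm{fin}}$ and such that its image $G$ in $\operatorname{PC}^{\bowtie}=\widehat{\operatorname{PC}^{\bowtie}}/{\mathfrak S}_{\mathrm{fin}}$ is a nonabelian simple group. If there exists an element of order $3$ in $\widehat{G}\smallsetminus{\mathfrak S}_{\mathrm{fin}}$, then $J_3(\widehat{G})=\operatorname{Ker}(\varepsilon|_{\widehat G})=D(\widehat{G})$.
   Context: $X=[0,1[$. $\widehat{\operatorname{PC}^{\bowtie}}$ is the group of bijections $X\to X$ continuous outside a finite subset; ${\mathfrak S}_{\mathrm{fin}}$ is its normal subgroup of finitely supported permutations, with classical signature $\operatorname{sgn}$ valued in $\mathbb{Z}/2\mathbb{Z}$. For a group $H$, $J_3(H)$ is the subgroup generated by the elements of order $3$ and $D(H)$ is the derived subgroup. The homomorphism $\varepsilon:\widehat{\operatorname{PC}^{\bowtie}}\to\mathbb{Z}/2\mathbb{Z}$ is defined as follows. For $h\in\widehat{\operatorname{PC}^{\bowtie}}$, a partition associated with $h$ is a finite partition $\mathcal P=\{I_1,\dots,I_n\}$ of $X$ into intervals $I_j=[\alpha_j,b_j[$ such that $h$ is continuous on $I_j^\circ=]\alpha_j,b_j[$ for each $j$ (so $h$ is strictly monotone there and $h(I_j^\circ)$ is an open interval). Let $\beta_j$ be the left endpoint of $h(I_j^\circ)$; $\{h(\alpha_j)\}=\{\beta_j\}$, and $\sigma_{(h,\mathcal P)}\in{\mathfrak S}_{\mathrm{fin}}$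 sends $h(\alpha_j)$ to $\beta_j$ for each $j$ and fixes all other points. $R(h,\mathcal P)$ is the number of $j$ with $h$ decreasing on $I_j^\circ$, and $\varepsilon(h,\mathcal P)=R(h,\mathcal P)+\operatorname{sgn}(\sigma_{(h,\mathcal P)})\bmod 2$. There is a unique associated partition $\mathcal P^{\min}_h$ with the fewest intervals, and $\varepsilon(h):=\varepsilon(h,\mathcal P^{\min}_h)$; it is a group homomorphism extending $\operatorname{sgn}$. *)

(* Defs.v *)
From Stdlib Require Import Reals Lra Lia List Bool ClassicalEpsilon.
Import ListNotations.
Open Scope R_scope.

Definition X (x : R) : Prop := 0 <= x < 1.

Definition contX_at (h : R -> R) (x : R) : Prop :=
  forall eps, 0 < eps -> exists delta, 0 < delta /\
    forall y, X y -> Rabs (y - x) < delta -> Rabs (h y - h x) < eps.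

(** A bijection of X is represented canonically by the function
    R -> R that agrees with it on X and is the identity outside X. *)
Definition PCB (h : R -> R) : Prop :=
  (forall x, X x -> X (h x)) /\
  (forall x y, X x -> X y -> h x = h y -> x = y) /\
  (forall y, X y -> exists x, X x /\ h x = y) /\
  (forall x, ~ X x -> h x = x) /\
  (exists S : list R, forall x, X x -> ~ In x S -> contX_at h x).

Definition Sfin (h : R -> R) : Prop :=
  PCB h /\ exists l : list R, forall x, ~ In x l -> h x = x.

Definition idf : R -> R := fun x => x.
Definition comp (g h : R -> R) : R -> R := fun x => g (h x).
Definition inv_pair (g g' : R -> R) : Prop :=
  forall x, g (g' x) = x /\ g' (g x) = x.

Definition is_subgroup (K : (R -> R) -> Prop) : Prop :=
  (forall f, K f -> PCB f) /\ K idf /\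
  (forall f g, K f -> K g -> K (comp f g)) /\
  (forall f, K f -> exists f', K f' /\ inv_pair f f').

Definition normal_in (N G : (R -> R) -> Prop) : Prop :=
  is_subgroup N /\ (forall f, N f -> G f) /\
  forall g g' n, G g -> inv_pair g g' -> N n -> N (comp g (comp n g')).

Definition generated (S : (R -> R) -> Prop) (f : R -> R) : Prop :=
  forall K, is_subgroup K -> (forall g, S g -> K g) -> K f.

Definition order3 (f : R -> R) : Prop :=
  comp f (comp f f) = idf /\ f <> idf.

Definition J3 (H : (R -> R) -> Prop) : (R -> R) -> Prop :=
  generated (fun f => H f /\ order3 f).

Definition commutator_of (H : (R -> R) -> Prop) (f : R -> R) : Prop :=
  exists g g' k k', H g /\ H k /\ inv_pair g g' /\ inv_pair k k' /\
    f = comp g (comp k (comp g' k')).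

Definition D (H : (R -> R) -> Prop) : (R -> R) -> Prop :=
  generated (commutator_of H).

(** A partition {[a_j, b_j[} of X into n intervals is encoded by the list
    alphas = [a_1; ...; a_n] of left endpoints; b_j = a_{j+1}, b_n = 1. *)
Definition alpha (P : list R) (j : nat) : R := nth j P 0.
Definition bnd (P : list R) (j : nat) : R := nth (S j) P 1.

Definition assoc_partition (h : R -> R) (P : list R) : Prop :=
  (0 < length P)%nat /\ alpha P 0 = 0 /\
  (forall j, (j < length P)%nat -> alpha P j < bnd P j) /\
  (forall j, (j < length P)%nat -> forall x,
       alpha P j < x < bnd P j -> continuity_pt h x).

Definition min_assoc_partition (h : R -> R) (P : list R) : Prop :=
  assoc_partition h P /\
  forall P', assoc_partition h P' -> (length P <= length P')%nat.

Definition is_inf (E : R -> Prop) (m : R) : Prop :=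
  (forall y, E y -> m <= y) /\ (forall m', (forall y, E y -> m' <= y) -> m' <= m).

Definition img_open (h : R -> R) (P : list R) (j : nat) (y : R) : Prop :=
  exists x, alpha P j < x < bnd P j /\ y = h x.

Definition decreasing_on (h : R -> R) (a b : R) : Prop :=
  forall x y, a < x -> x < y -> y < b -> h y < h x.

Fixpoint lookup (l : list (R * R)) (x : R) : R :=
  match l with
  | nil => x
  | (a, b) :: t => if Req_dec_T x a then b else lookup t x
  end.

Definition inv_count (sigma : R -> R) (L : list R) : nat :=
  fold_right plus 0%nat
    (map (fun x => fold_right plus 0%nat
       (map (fun y => if Rlt_dec x y then
                        (if Rlt_dec (sigma y) (sigma x) then 1%nat else 0%nat)
                      else 0%nat) L)) L).

(** epsilon(h, P) = b (in Z/2Z = bool).  betas = list of the beta_j (left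
    endpoints of h(I_j°)), decs = list recording whether h decreases on I_j°.
    sigma_(h,P) sends h(alpha_j) to beta_j and fixes the other points; it
    permutes the finite set {h(alpha_j)} = {beta_j}, and its signature is the
    parity of its number of inversions on that set. *)
Definition eps_hP (h : R -> R) (P : list R) (b : bool) : Prop :=
  exists (betas : list R) (decs : list bool),
    length betas = length P /\ length decs = length P /\
    (forall j, (j < length P)%nat -> is_inf (img_open h P j) (nth j betas 0)) /\
    (forall j, (j < length P)%nat ->
        (nth j decs false = true <-> decreasing_on h (alpha P j) (bnd P j))) /\
    let L := map h P in
    let sigma := lookup (combine L betas) in
    b = xorb (Nat.odd (count_occ bool_dec decs true))
             (Nat.odd (inv_count sigma L)).

Definition eps (h : R -> R) : bool :=
  epsilon (inhabits false)
    (fun b => exists P, min_assoc_partition h P /\ eps_hP h P b).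

(* Main.v *)
Require Import Defs.
From Stdlib Require Import Reals Lra Lia List Bool Permutation ClassicalEpsilon Classical FunctionalExtensionality Sorting.
Import ListNotations.
Open Scope R_scope.

Definition Rltb (a b : R) : bool := if Rlt_dec a b then true else false.

Lemma Rltb_true a b : Rltb a b = true <-> a < b.
Proof. unfold Rltb; destruct (Rlt_dec a b); split; intros; auto; discriminate. Qed.
Lemma Rltb_false a b : Rltb a b = false <-> ~ a < b.
Proof. unfold Rltb; destruct (Rlt_dec a b); split; intros; auto; try discriminate; contradiction. Qed.

Lemma Rltb_neg a b : a <> b -> Rltb b a = negb (Rltb a b).
Proof. intros H; unfold Rltb; destruct (Rlt_dec b a), (Rlt_dec a b); simpl; auto; lra. Qed.
Lemma Rltb_irr a : Rltb a a = false.
Proof. unfold Rltb; destruct (Rlt_dec a a); auto; lra. Qed.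

Definition xsum {A} (l : list A) (f : A -> bool) : bool :=
  fold_right (fun x acc => xorb (f x) acc) false l.

Lemma xsum_nil {A} (f : A -> bool) : xsum [] f = false.
Proof. reflexivity. Qed.
Lemma xsum_cons {A} (a : A) l f : xsum (a :: l) f = xorb (f a) (xsum l f).
Proof. reflexivity. Qed.
Lemma xsum_app {A} (l l' : list A) f : xsum (l ++ l') f = xorb (xsum l f) (xsum l' f).
Proof. induction l; simpl; auto. rewrite IHl, xorb_assoc; auto. Qed.

Lemma xsum_perm {A} (l l' : list A) f : Permutation l l' -> xsum l f = xsum l' f.
Proof.
  induction 1; simpl; auto.
  - rewrite IHPermutation; auto.
  - rewrite <- !xorb_assoc, (xorb_comm (f y)); auto.
  - congruence.
Qed.

Lemma xsum_ext {A} (l : list A) f g : (forall x, In x l -> f x = g x) -> xsum l f = xsum l g.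
Proof. induction l; simpl; intros; auto. rewrite H, IHl; auto. Qed.

Lemma xsum_xor {A} (l : list A) f g :
  xsum l (fun x => xorb (f x) (g x)) = xorb (xsum l f) (xsum l g).
Proof.
  induction l; simpl; auto. rewrite IHl.
  destruct (f a), (g a), (xsum l f), (xsum l g); reflexivity.
Qed.

Lemma xsum_false {A} (l : list A) : xsum l (fun _ => false) = false.
Proof. induction l; simpl; auto. Qed.

Lemma xsum_map {A B} (l : list A) (p : A -> B) f : xsum (map p l) f = xsum l (fun x => f (p x)).
Proof. induction l; simpl; auto. rewrite IHl; auto. Qed.

Lemma odd_sum {A} (l : list A) (f : A -> nat) :
  Nat.odd (fold_right plus 0%nat (map f l)) = xsum l (fun x => Nat.odd (f x)).
Proof. induction l; simpl; auto. rewrite Nat.odd_add, IHl; auto. Qed.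

Lemma odd_count_occ (l : list bool) :
  Nat.odd (count_occ bool_dec l true) = xsum l (fun b => b).
Proof.
  induction l; simpl; auto. destruct a; simpl.
  - rewrite Nat.odd_succ, <- Nat.negb_odd, IHl. destruct (xsum l _); auto.
  - auto.
Qed.

Definition Dsum {A} (l : list A) (f : A -> A -> bool) : bool :=
  xsum l (fun x => xsum l (fun y => f x y)).

Lemma Dsum_cons {A} (a : A) l f :
  Dsum (a :: l) f = xorb (f a a) (xorb (xsum l (fun y => xorb (f a y) (f y a))) (Dsum l f)).
Proof.
  unfold Dsum; simpl. rewrite xsum_xor.
  rewrite xsum_xor.
  destruct (f a a), (xsum l (fun y => f a y)), (xsum l (fun x => f x a)),
   (xsum l (fun x => xsum l (fun y => f x y))); reflexivity.
Qed.

Lemma Dsum_perm {A} (l l' : list A) f : Permutation l l' -> Dsum l f = Dsum l' f.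
Proof.
  intros H. unfold Dsum. rewrite (xsum_perm _ _ _ H).
  apply xsum_ext. intros; apply xsum_perm; auto.
Qed.

Lemma Dsum_map {A B} (l : list A) (p : A -> B) f :
  Dsum (map p l) f = Dsum l (fun x y => f (p x) (p y)).
Proof.
  unfold Dsum. rewrite xsum_map. apply xsum_ext; intros. apply xsum_map.
Qed.

Lemma Dsum_ext {A} (l : list A) f g :
  (forall x y, In x l -> In y l -> f x y = g x y) -> Dsum l f = Dsum l g.
Proof. intros H; unfold Dsum; apply xsum_ext; intros; apply xsum_ext; auto. Qed.

Lemma Dsum_xor {A} (l : list A) f g :
  Dsum l (fun x y => xorb (f x y) (g x y)) = xorb (Dsum l f) (Dsum l g).
Proof.
  unfold Dsum. rewrite <- xsum_xor. apply xsum_ext; intros. apply xsum_xor.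
Qed.

Lemma Dsum_sym_zero {A} (l : list A) f :
  (forall x, In x l -> f x x = false) ->
  (forall x y, In x l -> In y l -> f x y = f y x) -> Dsum l f = false.
Proof.
  induction l; intros H1 H2; auto.
  rewrite Dsum_cons, H1 by (left; auto).
  rewrite IHl; [| intros; apply H1; right; auto | intros; apply H2; right; auto].
  rewrite (xsum_ext _ _ (fun _ => false)), xsum_false; auto.
  intros y Hy. rewrite H2 by (simpl; auto). destruct (f y a); auto.
Qed.

Definition Inv (p q : R -> R) (C : list R) : bool :=
  Dsum C (fun x y => Rltb (p x) (p y) && Rltb (q y) (q x)).

Definition injC (p : R -> R) (C : list R) : Prop :=
  forall x y, In x C -> In y C -> p x = p y -> x = y.

Lemma Inv_mult p q r C : injC p C -> injC q C -> injC r C ->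
  Inv p r C = xorb (Inv p q C) (Inv q r C).
Proof.
  intros Hp Hq Hr. unfold Inv.
  assert (E: Dsum C (fun x y => xorb (Rltb (p x) (p y) && Rltb (r y) (r x))
     (xorb (Rltb (p x) (p y) && Rltb (q y) (q x)) (Rltb (q x) (q y) && Rltb (r y) (r x))))
     = false).
  { apply Dsum_sym_zero.
    - intros; rewrite !Rltb_irr; simpl. destruct (Rltb (q x) (q x)); reflexivity.
    - intros x y Hx Hy. destruct (Req_dec x y) as [->|Hxy]; auto.
      assert (p x <> p y) by (intro E; apply Hxy; apply Hp; auto).
      assert (q x <> q y) by (intro E; apply Hxy; apply Hq; auto).
      assert (r x <> r y) by (intro E; apply Hxy; apply Hr; auto).
      rewrite (Rltb_neg (p x) (p y)), (Rltb_neg (q x) (q y)), (Rltb_neg (r x) (r y)) by auto.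
      destruct (Rltb (p x) (p y)), (Rltb (q x) (q y)), (Rltb (r x) (r y)); reflexivity. }
  rewrite !Dsum_xor in E.
  destruct (Dsum C (fun x y => Rltb (p x) (p y) && Rltb (r y) (r x))),
    (Dsum C (fun x y => Rltb (p x) (p y) && Rltb (q y) (q x))),
    (Dsum C (fun x y => Rltb (q x) (q y) && Rltb (r y) (r x))); simpl in *; auto.
Qed.

Lemma Inv_self p C : Inv p p C = false.
Proof.
  unfold Inv. rewrite (Dsum_ext _ _ (fun _ _ => false)).
  - unfold Dsum. rewrite (xsum_ext _ _ (fun _ => false)); [apply xsum_false|].
    intros; apply xsum_false.
  - intros. unfold Rltb. destruct (Rlt_dec (p x) (p y)), (Rlt_dec (p y) (p x)); auto; lra.
Qed.

Lemma Inv_sym p q C : injC p C -> injC q C -> Inv p q C = Inv q p C.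
Proof.
  intros. pose proof (Inv_mult p q p C H H0 H). rewrite Inv_self in H1.
  destruct (Inv p q C), (Inv q p C); simpl in *; auto.
Qed.

Lemma Inv_set p q g C :
  Permutation (map p C) (map q C) ->
  Inv p (fun x => g (p x)) C = Inv q (fun x => g (q x)) C.
Proof.
  intros H. unfold Inv.
  rewrite <- (Dsum_map C p (fun u v => Rltb u v && Rltb (g v) (g u))).
  rewrite <- (Dsum_map C q (fun u v => Rltb u v && Rltb (g v) (g u))).
  apply Dsum_perm; auto.
Qed.

Lemma injC_comp g p C : injC p C -> (forall u v, In u (map p C) -> In v (map p C) -> g u = g v -> u = v) ->
  injC (fun x => g (p x)) C.
Proof. intros Hp Hg x y Hx Hy E. apply Hp; auto. apply Hg; auto; apply in_map; auto. Qed.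

Lemma Inv_conj g p q C :
  Permutation (map p C) (map q C) -> injC p C -> injC q C ->
  (forall u v, In u (map p C) -> In v (map p C) -> g u = g v -> u = v) ->
  Inv (fun x => g (p x)) (fun x => g (q x)) C = Inv p q C.
Proof.
  intros HP Hp Hq Hg.
  assert (Hg' : forall u v, In u (map q C) -> In v (map q C) -> g u = g v -> u = v).
  { intros u v Hu Hv; apply Hg; apply (Permutation_in _ (Permutation_sym HP)); auto. }
  pose proof (injC_comp g p C Hp Hg) as Hgp.
  pose proof (injC_comp g q C Hq Hg') as Hgq.
  rewrite (Inv_mult _ q _ C Hgp Hq Hgq).
  rewrite (Inv_mult _ p q C Hgp Hp Hq).
  rewrite (Inv_sym _ p C Hgp Hp).
  rewrite (Inv_set p q g C HP).
  destruct (Inv q (fun x => g (q x)) C), (Inv p q C); reflexivity.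
Qed.

Lemma Inv_fix p q c C :
  p c = q c -> Permutation (map p C) (map q C) -> injC p (c :: C) -> injC q (c :: C) ->
  Inv p q (c :: C) = Inv p q C.
Proof.
  intros E HP Hp Hq. unfold Inv. rewrite Dsum_cons.
  rewrite Rltb_irr. simpl.
  rewrite (xsum_ext _ _ (fun y => xorb (Rltb (p c) (p y)) (Rltb (q c) (q y)))).
  - rewrite xsum_xor.
    rewrite <- (xsum_map C p (fun u => Rltb (p c) u)).
    rewrite <- (xsum_map C q (fun u => Rltb (q c) u)).
    rewrite E, (xsum_perm _ _ _ HP).
    destruct (xsum (map q C) _); reflexivity.
  - intros y Hy.
    destruct (Req_dec y c) as [->|Hyc].
    { rewrite E, !Rltb_irr; reflexivity. }
    assert (p c <> p y) by (intro F; apply Hyc; symmetry; apply Hp; simpl; auto).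
    assert (q c <> q y) by (intro F; apply Hyc; symmetry; apply Hq; simpl; auto).
    rewrite (Rltb_neg (p c) (p y)), (Rltb_neg (q c) (q y)) by auto.
    rewrite <- E in *.
    destruct (Rltb (p c) (p y)), (Rltb (p c) (q y)); reflexivity.
Qed.

Definition swap (a c x : R) : R :=
  if Req_dec_T x a then c else if Req_dec_T x c then a else x.

Lemma swap_a a c : swap a c a = c.
Proof. unfold swap; destruct (Req_dec_T a a); congruence. Qed.
Lemma swap_c a c : swap a c c = a.
Proof. unfold swap; destruct (Req_dec_T c a), (Req_dec_T c c); congruence. Qed.
Lemma swap_o a c x : x <> a -> x <> c -> swap a c x = x.
Proof. intros; unfold swap; destruct (Req_dec_T x a), (Req_dec_T x c); congruence. Qed.

Lemma perm_two (K : list R) a c : NoDup K -> In a K -> In c K -> a <> c ->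
  exists K0, Permutation K (a :: c :: K0) /\ NoDup (a :: c :: K0).
Proof.
  intros ND Ha Hc Hac.
  destruct (in_split _ _ Ha) as [l1 [l2 ->]].
  assert (Hc' : In c (l1 ++ l2)).
  { apply in_app_or in Hc; apply in_or_app; destruct Hc as [H|[H|H]]; auto; congruence. }
  destruct (in_split _ _ Hc') as [m1 [m2 Em]].
  exists (m1 ++ m2).
  assert (P : Permutation (l1 ++ a :: l2) (a :: c :: m1 ++ m2)).
  { eapply perm_trans. apply Permutation_sym, Permutation_middle.
    constructor. rewrite Em. apply Permutation_sym, Permutation_middle. }
  split; auto. eapply Permutation_NoDup; eauto.
Qed.

Lemma Dsum_swap (K : list R) a c F : NoDup K -> In a K -> In c K ->
  Dsum K (fun x y => F (swap a c x) (swap a c y)) = Dsum K F.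
Proof.
  intros ND Ha Hc.
  destruct (Req_dec a c) as [->|Hac].
  { apply Dsum_ext; intros x y _ _. unfold swap.
    destruct (Req_dec_T x c), (Req_dec_T y c); subst; auto. }
  destruct (perm_two K a c ND Ha Hc Hac) as [K0 [HP ND']].
  rewrite <- (Dsum_map K (swap a c) F). apply Dsum_perm.
  apply perm_trans with (map (swap a c) (a :: c :: K0)); [apply Permutation_map; auto|].
  simpl. rewrite swap_a, swap_c.
  inversion ND'; subst. inversion H2; subst. simpl in H1.
  rewrite (map_ext_in (swap a c) (fun x => x)).
  - rewrite map_id. eapply perm_trans. apply perm_swap. apply Permutation_sym; auto.
  - intros x Hx. apply swap_o; intro; subst; auto.
Qed.

Lemma Inv_swap_odd (K : list R) p a c : NoDup K -> In a K -> In c K -> a <> c -> injC p K ->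
  Inv p (fun x => p (swap a c x)) K = true.
Proof.
  intros ND Ha Hc Hac Hp.
  destruct (perm_two K a c ND Ha Hc Hac) as [K0 [HP ND']].
  assert (Hp' : injC p (a :: c :: K0)).
  { intros x y Hx Hy; apply Hp; apply (Permutation_in _ (Permutation_sym HP)); auto. }
  unfold Inv. rewrite (Dsum_perm _ _ _ HP).
  inversion ND'; subst. inversion H2; subst. simpl in H1.
  assert (Hpac : p a <> p c) by (intro E; apply Hac; apply Hp'; simpl; auto).
  rewrite !Dsum_cons. rewrite swap_a, swap_c, !Rltb_irr. simpl.
  rewrite (Rltb_neg (p a) (p c)) by auto.
  assert (E0 : Dsum K0 (fun x y => Rltb (p x) (p y) && Rltb (p (swap a c y)) (p (swap a c x))) = false).
  { rewrite (Dsum_ext _ _ (fun _ _ => false)).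
    - apply Dsum_sym_zero; auto.
    - intros x y Hx Hy. rewrite !swap_o by (intro; subst; auto).
      unfold Rltb. destruct (Rlt_dec (p x) (p y)), (Rlt_dec (p y) (p x)); auto; lra. }
  rewrite E0.
  assert (E1 : forall y, In y K0 ->
     xorb (Rltb (p a) (p y) && Rltb (p (swap a c y)) (p c))
          (Rltb (p y) (p a) && Rltb (p c) (p (swap a c y))) =
     xorb (Rltb (p c) (p y) && Rltb (p (swap a c y)) (p a))
          (Rltb (p y) (p c) && Rltb (p a) (p (swap a c y)))).
  { intros y Hy. rewrite swap_o by (intro; subst; auto).
    assert (p a <> p y) by (intro E; assert (a = y) by (apply Hp'; simpl; auto); subst; auto).
    assert (p c <> p y) by (intro E; assert (c = y) by (apply Hp'; simpl; auto); subst; auto).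
    rewrite (Rltb_neg (p a) (p y)), (Rltb_neg (p c) (p y)) by auto.
    destruct (Rltb (p a) (p y)), (Rltb (p c) (p y)); reflexivity. }
  rewrite (xsum_ext _ _ _ E1). rewrite ?swap_a, ?swap_c, ?Rltb_irr.
  rewrite ?(Rltb_neg (p a) (p c)) by auto.
  destruct (Rltb (p a) (p c)), (xsum K0 _); reflexivity.
Qed.

Definition img (h : R -> R) (a b : R) (y : R) : Prop := exists x, a < x < b /\ y = h x.
Definition beta (h : R -> R) (a b : R) : R := epsilon (inhabits 0) (is_inf (img h a b)).
Definition cont_on (h : R -> R) (a b : R) : Prop := forall x, a < x < b -> continuity_pt h x.
Definition inj_on (h : R -> R) (a b : R) : Prop :=
  forall x y, a < x < b -> a < y < b -> h x = h y -> x = y.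
Definition incr_on (h : R -> R) (a b : R) : Prop :=
  forall x y, a < x -> x < y -> y < b -> h x < h y.

Lemma is_inf_unique E m m' : is_inf E m -> is_inf E m' -> m = m'.
Proof. intros [A B] [A' B']. apply Rle_antisym; auto. Qed.

Lemma inf_exists E : (exists y, E y) -> (forall y, E y -> 0 <= y) -> exists m, is_inf E m.
Proof.
  intros [y0 Hy0] Hlb.
  destruct (completeness (fun z => E (- z))) as [m [Hub Hl]].
  - exists 0. intros z Hz. apply Hlb in Hz. lra.
  - exists (- y0). rewrite Ropp_involutive; auto.
  - exists (- m). split.
    + intros y Hy. assert (- y <= m) by (apply Hub; rewrite Ropp_involutive; auto). lra.
    + intros m' Hm'. assert (m <= - m').
      { apply Hl. intros z Hz. apply Hm' in Hz. lra. }
      lra.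
Qed.

Lemma beta_spec h a b : a < b -> (forall x, a < x < b -> 0 <= h x) ->
  is_inf (img h a b) (beta h a b).
Proof.
  intros Hab Hpos. unfold beta. apply epsilon_spec.
  apply inf_exists.
  - exists (h ((a + b) / 2)). exists ((a + b) / 2). split; auto. lra.
  - intros y [x [Hx ->]]. auto.
Qed.

Lemma aff_cont (x k t0 : R) : continuity_pt (fun t => x + t * k) t0.
Proof. apply derivable_continuous_pt. reg. Qed.

Lemma IVT_lr h a b x1 x2 y : cont_on h a b -> a < x1 -> x1 < x2 -> x2 < b ->
  (h x1 < y < h x2 \/ h x2 < y < h x1) -> exists x, x1 < x < x2 /\ h x = y.
Proof.
  intros Hc H1 H2 H3 [Hy|Hy].
  - destruct (Ranalysis5.IVT_interv (fun t => h t - y) x1 x2) as [z [Hz Ez]]; auto.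
    + intros t Ht. apply continuity_pt_minus. apply Hc; lra. apply continuity_pt_const. intros u v; auto.
    + simpl; lra.
    + simpl; lra.
    + exists z. simpl in Ez. assert (z <> x1) by (intro; subst; lra).
      assert (z <> x2) by (intro; subst; lra). split; [lra|lra].
  - destruct (Ranalysis5.IVT_interv (fun t => y - h t) x1 x2) as [z [Hz Ez]]; auto.
    + intros t Ht. apply continuity_pt_minus. apply continuity_pt_const. intros u v; auto. apply Hc; lra.
    + simpl; lra.
    + simpl; lra.
    + exists z. simpl in Ez. assert (z <> x1) by (intro; subst; lra).
      assert (z <> x2) by (intro; subst; lra). split; [lra|lra].
Qed.

Lemma IVT_any h a b x1 x2 y : cont_on h a b -> a < x1 < b -> a < x2 < b ->
  (h x1 < y < h x2 \/ h x2 < y < h x1) -> exists x, a < x < b /\ h x = y.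
Proof.
  intros Hc H1 H2 Hy. destruct (Rtotal_order x1 x2) as [Hl|[He|Hg]].
  - destruct (IVT_lr h a b x1 x2 y) as [x [Hx Ex]]; auto; try lra. exists x; split; auto; lra.
  - subst; lra.
  - destruct (IVT_lr h a b x2 x1 y) as [x [Hx Ex]]; auto; try lra. exists x; split; auto; lra.
Qed.

Lemma conv_bounds x y t : 0 <= t <= 1 ->
  (x <= y -> x <= x + t * (y - x) <= y) /\ (y <= x -> y <= x + t * (y - x) <= x).
Proof.
  intros Ht. split; intros Hxy.
  - assert (0 <= t * (y - x)) by (apply Rmult_le_pos; lra).
    assert (t * (y - x) <= 1 * (y - x)) by (apply Rmult_le_compat_r; lra). lra.
  - assert (0 <= t * (x - y)) by (apply Rmult_le_pos; lra).
    assert (t * (x - y) <= 1 * (x - y)) by (apply Rmult_le_compat_r; lra). lra.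
Qed.

Lemma conv_gt a x y t : 0 <= t <= 1 -> a < x -> a < y -> a < x + t * (y - x).
Proof. intros Ht H1 H2; destruct (conv_bounds x y t Ht) as [A B]; destruct (Rle_dec x y); [specialize (A r)|specialize (B ltac:(lra))]; lra. Qed.
Lemma conv_lt b x y t : 0 <= t <= 1 -> x < b -> y < b -> x + t * (y - x) < b.
Proof. intros Ht H1 H2; destruct (conv_bounds x y t Ht) as [A B]; destruct (Rle_dec x y); [specialize (A r)|specialize (B ltac:(lra))]; lra. Qed.

Lemma same_orient h a b x1 x2 y1 y2 : cont_on h a b -> inj_on h a b ->
  a < x1 -> x1 < x2 -> x2 < b -> a < y1 -> y1 < y2 -> y2 < b ->
  h x1 < h x2 -> h y1 < h y2.
Proof.
  intros Hc Hi H1 H2 H3 H4 H5 H6 Hx.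
  destruct (Rlt_or_le (h y1) (h y2)) as [|Hy]; auto. exfalso.
  assert (Hy' : h y2 < h y1).
  { destruct (Rle_lt_or_eq_dec _ _ Hy); auto. assert (y1 = y2) by (apply Hi; auto; lra). lra. }
  set (u := fun t => x1 + t * (y1 - x1)). set (v := fun t => x2 + t * (y2 - x2)).
  assert (Hu : forall t, 0 <= t <= 1 -> a < u t < b).
  { intros t Ht; unfold u; split; [apply conv_gt|apply conv_lt]; auto; lra. }
  assert (Hv : forall t, 0 <= t <= 1 -> a < v t < b).
  { intros t Ht; unfold v; split; [apply conv_gt|apply conv_lt]; auto; lra. }
  assert (Huv : forall t, 0 <= t <= 1 -> u t < v t).
  { intros t Ht; unfold u, v.
    pose proof (conv_gt 0 (x2 - x1) (y2 - y1) t Ht ltac:(lra) ltac:(lra)). lra. }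
  destruct (Ranalysis5.IVT_interv (fun t => h (u t) - h (v t)) 0 1) as [t [Ht Et]].
  - intros t Ht. apply continuity_pt_minus.
    + apply (continuity_pt_comp u h). apply aff_cont. apply Hc; auto.
    + apply (continuity_pt_comp v h). apply aff_cont. apply Hc; auto.
  - lra.
  - unfold u, v; simpl. replace (x1 + 0 * (y1 - x1)) with x1 by ring.
    replace (x2 + 0 * (y2 - x2)) with x2 by ring. lra.
  - unfold u, v; simpl. replace (x1 + 1 * (y1 - x1)) with y1 by ring.
    replace (x2 + 1 * (y2 - x2)) with y2 by ring. lra.
  - simpl in Et. assert (u t = v t) by (apply Hi; auto; lra).
    specialize (Huv t Ht). lra.
Qed.

Lemma mono h a b : a < b -> cont_on h a b -> inj_on h a b ->
  incr_on h a b \/ decreasing_on h a b.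
Proof.
  intros Hab Hc Hi.
  set (m1 := a + (b - a) / 3). set (m2 := a + 2 * (b - a) / 3).
  assert (a < m1) by (unfold m1; lra). assert (m1 < m2) by (unfold m1, m2; lra).
  assert (m2 < b) by (unfold m2; lra).
  destruct (Rlt_or_le (h m1) (h m2)) as [Hl|Hle].
  - left. intros x y Hx Hxy Hy. eapply (same_orient h a b m1 m2); eauto.
  - right. intros x y Hx Hxy Hy.
    destruct (Rlt_or_le (h x) (h y)) as [Hl|Hl].
    + exfalso. assert (h m1 < h m2) by (eapply (same_orient h a b x y); eauto; lra). lra.
    + destruct (Rle_lt_or_eq_dec _ _ Hl); auto. assert (x = y) by (apply Hi; auto; lra). lra.
Qed.

Definition piece (h : R -> R) (a b : R) : Prop :=
  a < b /\ 0 <= a /\ b <= 1 /\ cont_on h a b /\ inj_on h a b /\ (forall x, a < x < b -> X (h x)).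

Lemma piece_inf h a b : piece h a b -> is_inf (img h a b) (beta h a b).
Proof. intros (H1 & H2 & H3 & H4 & H5 & H6). apply beta_spec; auto. intros x Hx; apply H6; auto. Qed.

Lemma piece_mono h a b : piece h a b -> incr_on h a b \/ decreasing_on h a b.
Proof. intros (H1 & H2 & H3 & H4 & H5 & H6). apply mono; auto. Qed.

Lemma piece_notin h a b x : piece h a b -> a < x < b -> h x <> beta h a b.
Proof.
  intros Hp Hx E. destruct (piece_inf h a b Hp) as [Hlb _].
  destruct (piece_mono h a b Hp) as [Hm|Hm].
  - assert (h ((a + x) / 2) < h x) by (apply Hm; lra).
    assert (beta h a b <= h ((a + x) / 2)) by (apply Hlb; exists ((a + x) / 2); split; auto; lra).
    lra.
  - assert (h ((x + b) / 2) < h x) by (apply Hm; lra).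
    assert (beta h a b <= h ((x + b) / 2)) by (apply Hlb; exists ((x + b) / 2); split; auto; lra).
    lra.
Qed.

Lemma piece_gt h a b x : piece h a b -> a < x < b -> beta h a b < h x.
Proof.
  intros Hp Hx. destruct (piece_inf h a b Hp) as [Hlb _].
  assert (beta h a b <= h x) by (apply Hlb; exists x; auto).
  pose proof (piece_notin h a b x Hp Hx). lra.
Qed.

Lemma piece_img h a b x0 y : piece h a b -> a < x0 < b -> beta h a b < y <= h x0 ->
  exists x, a < x < b /\ h x = y.
Proof.
  intros Hp Hx0 Hy. destruct (Req_dec y (h x0)) as [->|Hne]; [exists x0; auto|].
  destruct (piece_inf h a b Hp) as [_ Hgl].
  assert (exists x1, a < x1 < b /\ h x1 < y) as [x1 [Hx1 Hx1y]].
  { destruct (Classical_Prop.classic (exists x1, a < x1 < b /\ h x1 < y)) as [|Hn]; auto.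
    exfalso. assert (y <= beta h a b); [|lra].
    apply Hgl. intros z [x [Hx ->]]. destruct (Rlt_or_le (h x) y); auto.
    exfalso; apply Hn; exists x; auto. }
  destruct Hp as (H1 & H2 & H3 & H4 & H5 & H6).
  apply (IVT_any h a b x1 x0 y); auto. lra.
Qed.

Lemma cont_near h c : continuity_pt h c -> forall eps, 0 < eps ->
  exists del, 0 < del /\ forall x, Rabs (x - c) < del -> Rabs (h x - h c) < eps.
Proof.
  intros Hc eps He. destruct (Hc eps He) as [del [Hd H]].
  exists del; split; auto. intros x Hx.
  destruct (Req_dec x c) as [->|Hne].
  - rewrite Rminus_diag, Rabs_R0; auto.
  - apply (H x). split; [split; [constructor|auto]|]. apply Hx.
Qed.

Lemma inf_L1 h a b c m : incr_on h a b -> a < c < b -> is_inf (img h a b) m -> is_inf (img h a c) m.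
Proof.
  intros Hi Hc [Hlb Hgl]. split.
  - intros y [x [Hx ->]]. apply Hlb. exists x; split; auto; lra.
  - intros m' Hm'. apply Hgl. intros y [x [Hx ->]].
    destruct (Rlt_or_le x c).
    + apply Hm'. exists x; split; auto; lra.
    + assert (h ((a + c) / 2) < h x) by (apply Hi; lra).
      assert (m' <= h ((a + c) / 2)) by (apply Hm'; exists ((a + c) / 2); split; auto; lra). lra.
Qed.

Lemma inf_L4 h a b c m : decreasing_on h a b -> a < c < b -> is_inf (img h a b) m -> is_inf (img h c b) m.
Proof.
  intros Hi Hc [Hlb Hgl]. split.
  - intros y [x [Hx ->]]. apply Hlb. exists x; split; auto; lra.
  - intros m' Hm'. apply Hgl. intros y [x [Hx ->]].
    destruct (Rlt_or_le c x).
    + apply Hm'. exists x; split; auto; lra.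
    + assert (h ((c + b) / 2) < h x) by (apply Hi; lra).
      assert (m' <= h ((c + b) / 2)) by (apply Hm'; exists ((c + b) / 2); split; auto; lra). lra.
Qed.

Lemma inf_L2 h a b c : incr_on h a b -> a < c < b -> continuity_pt h c -> is_inf (img h c b) (h c).
Proof.
  intros Hi Hc Hcont. split.
  - intros y [x [Hx ->]]. left. apply Hi; lra.
  - intros m' Hm'. destruct (Rle_or_lt m' (h c)) as [|Hlt]; auto. exfalso.
    destruct (cont_near h c Hcont (m' - h c)) as [del [Hd Hn]]; [lra|].
    set (x := c + Rmin del (b - c) / 2).
    assert (0 < Rmin del (b - c)) by (apply Rmin_pos; lra).
    assert (Rmin del (b - c) <= del) by apply Rmin_l.
    assert (Rmin del (b - c) <= b - c) by apply Rmin_r.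
    assert (Hx : c < x < b) by (unfold x; lra).
    assert (m' <= h x) by (apply Hm'; exists x; split; auto).
    assert (Rabs (h x - h c) < m' - h c) by (apply Hn; unfold x; rewrite Rabs_right; lra).
    apply Rabs_def2 in H3. lra.
Qed.

Lemma inf_L3 h a b c : decreasing_on h a b -> a < c < b -> continuity_pt h c -> is_inf (img h a c) (h c).
Proof.
  intros Hi Hc Hcont. split.
  - intros y [x [Hx ->]]. left. apply Hi; lra.
  - intros m' Hm'. destruct (Rle_or_lt m' (h c)) as [|Hlt]; auto. exfalso.
    destruct (cont_near h c Hcont (m' - h c)) as [del [Hd Hn]]; [lra|].
    set (x := c - Rmin del (c - a) / 2).
    assert (0 < Rmin del (c - a)) by (apply Rmin_pos; lra).
    assert (Rmin del (c - a) <= del) by apply Rmin_l.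
    assert (Rmin del (c - a) <= c - a) by apply Rmin_r.
    assert (Hx : a < x < c) by (unfold x; lra).
    assert (m' <= h x) by (apply Hm'; exists x; split; auto).
    assert (Rabs (h x - h c) < m' - h c) by (apply Hn; unfold x; rewrite Rabs_left; lra).
    apply Rabs_def2 in H3. lra.
Qed.

Lemma decr_sub h a b a' b' : decreasing_on h a b -> a <= a' -> b' <= b -> decreasing_on h a' b'.
Proof. intros H H1 H2 x y Hx Hxy Hy. apply H; lra. Qed.

Lemma incr_not_decr h a b a' b' : incr_on h a b -> a <= a' -> a' < b' -> b' <= b -> ~ decreasing_on h a' b'.
Proof.
  intros H H1 H2 H3 Hd.
  assert (h (a' + (b' - a') / 3) < h (a' + 2 * (b' - a') / 3)) by (apply H; lra).
  assert (h (a' + 2 * (b' - a') / 3) < h (a' + (b' - a') / 3)) by (apply Hd; lra).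
  lra.
Qed.

Lemma incr_sub h a b a' b' : incr_on h a b -> a <= a' -> b' <= b -> incr_on h a' b'.
Proof. intros H H1 H2 x y Hx Hxy Hy. apply H; lra. Qed.

Definition cutset (C : list R) : Prop := NoDup C /\ In 0 C /\ (forall c, In c C -> X c).
Definition good (h : R -> R) (C : list R) : Prop :=
  forall x, 0 < x < 1 -> ~ In x C -> continuity_pt h x.

Definition nxt (C : list R) (x : R) : R :=
  fold_right (fun d acc => if Rlt_dec x d then Rmin d acc else acc) 1 C.
Definition prv (C : list R) (x : R) : R :=
  fold_right (fun d acc => if Rlt_dec d x then Rmax d acc else acc) 0 C.

Lemma nxt_le1 C x : nxt C x <= 1.
Proof.
  induction C; simpl; [lra|]. destruct (Rlt_dec x a); auto.
  pose proof (Rmin_r a (nxt C x)). unfold nxt in *. lra.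
Qed.

Lemma nxt_le C x d : In d C -> x < d -> nxt C x <= d.
Proof.
  induction C; simpl; intros Hd Hx; [contradiction|].
  fold (nxt C x). destruct Hd as [->|Hd].
  - destruct (Rlt_dec x d); [apply Rmin_l|lra].
  - destruct (Rlt_dec x a).
    + pose proof (Rmin_r a (nxt C x)). specialize (IHC Hd Hx). lra.
    + auto.
Qed.

Lemma nxt_in C x : nxt C x = 1 \/ In (nxt C x) C.
Proof.
  induction C; simpl; auto. fold (nxt C x).
  destruct (Rlt_dec x a).
  - unfold Rmin. destruct (Rle_dec a (nxt C x)); auto. destruct IHC; auto.
  - destruct IHC; auto.
Qed.

Lemma nxt_gt C x : x < 1 -> (forall d, In d C -> d < 1) -> x < nxt C x.
Proof.
  induction C; simpl; intros Hx HC; auto. fold (nxt C x).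
  destruct (Rlt_dec x a).
  - apply Rmin_glb_lt; auto.
  - auto.
Qed.

Lemma nxt_noC C x d : In d C -> ~ (x < d < nxt C x).
Proof. intros Hd [H1 H2]. pose proof (nxt_le C x d Hd H1). lra. Qed.

Lemma nxt_char C x n : x < 1 -> (forall d, In d C -> d < 1) ->
  (n = 1 \/ In n C) -> x < n -> n <= 1 -> (forall d, In d C -> x < d -> n <= d) ->
  nxt C x = n.
Proof.
  intros Hx HC Hn Hxn Hn1 Hmin. apply Rle_antisym.
  - destruct Hn as [->|Hn]; [apply nxt_le1|]. apply nxt_le; auto.
  - destruct (nxt_in C x) as [E|E]; [rewrite E; auto|]. apply Hmin; auto. apply nxt_gt; auto.
Qed.

Lemma prv_spec C x : 0 < x -> (forall d, In d C -> 0 <= d) ->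
  prv C x < x /\ (prv C x = 0 \/ In (prv C x) C) /\ (forall d, In d C -> d < x -> d <= prv C x).
Proof.
  intros Hx HC. induction C; simpl.
  - split; [lra|]. split; auto. intros; contradiction.
  - fold (prv C x). destruct IHC as (A & B & D); [intros; apply HC; simpl; auto|].
    destruct (Rlt_dec a x).
    + split; [apply Rmax_lub_lt; auto|]. split.
      * unfold Rmax. destruct (Rle_dec a (prv C x)); auto. destruct B; auto.
      * intros d [->|Hd] Hdx; [apply Rmax_l|]. pose proof (Rmax_r a (prv C x)). specialize (D d Hd Hdx); lra.
    + split; auto. split; [destruct B; auto|].
      intros d [->|Hd] Hdx; [contradiction|auto].
Qed.

Lemma cutset_lt1 C : cutset C -> forall d, In d C -> d < 1.
Proof. intros (_ & _ & H) d Hd. apply H; auto. Qed.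

Lemma cover C x : cutset C -> X x -> ~ In x C -> exists d, In d C /\ d < x < nxt C d.
Proof.
  intros HC Hx Hn. destruct HC as (ND & H0 & HX).
  assert (Hx0 : 0 < x) by (destruct Hx; destruct H; auto; subst; contradiction).
  destruct (prv_spec C x Hx0) as (A & B & D); [intros d Hd; apply HX; auto|].
  exists (prv C x).
  assert (HpC : In (prv C x) C) by (destruct B as [B|B]; auto; rewrite B; auto).
  split; auto. split; auto.
  destruct (Rlt_or_le x (nxt C (prv C x))) as [|Hle]; auto. exfalso.
  destruct (nxt_in C (prv C x)) as [E|E].
  - rewrite E in Hle. destruct Hx; lra.
  - assert (prv C x < nxt C (prv C x)).
    { apply nxt_gt. apply HX in HpC; destruct HpC; lra. intros; apply HX in H; destruct H; lra. }
    destruct (Rle_lt_or_eq_dec _ _ Hle) as [Hl|He].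
    + specialize (D _ E Hl). lra.
    + apply Hn. rewrite <- He; auto.
Qed.

Lemma pieces_disj C c d x : In c C -> In d C -> c <> d ->
  c < x < nxt C c -> d < x < nxt C d -> False.
Proof.
  intros Hc Hd Hcd H1 H2. destruct (Rtotal_order c d) as [Hl|[He|Hg]].
  - pose proof (nxt_le C c d Hd Hl). lra.
  - contradiction.
  - pose proof (nxt_le C d c Hc Hg). lra.
Qed.

Lemma pcb_inj h x y : PCB h -> X x -> X y -> h x = h y -> x = y.
Proof. intros (_ & H & _) ; apply H. Qed.
Lemma pcb_X h x : PCB h -> X x -> X (h x).
Proof. intros (H & _) ; apply H. Qed.
Lemma pcb_surj h y : PCB h -> X y -> exists x, X x /\ h x = y.
Proof. intros (_ & _ & H & _); apply H. Qed.

Lemma pcb_piece h C c : PCB h -> cutset C -> good h C -> In c C -> piece h c (nxt C c).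
Proof.
  intros Hh HC Hg Hc. pose proof (cutset_lt1 C HC) as Hlt.
  destruct HC as (ND & H0 & HX). pose proof (HX c Hc) as [Hc0 Hc1].
  pose proof (nxt_gt C c Hc1 Hlt). pose proof (nxt_le1 C c).
  split; [auto|]. split; [auto|]. split; [auto|]. split; [|split].
  - intros x Hx. apply Hg; [lra|]. intro Hin. apply (nxt_noC C c x Hin); auto.
  - intros x y Hx Hy. apply pcb_inj; auto; split; lra.
  - intros x Hx. apply pcb_X; auto; split; lra.
Qed.

Section Cut.
Variable h : R -> R.
Variable C : list R.
Hypothesis Hh : PCB h.
Hypothesis HC : cutset C.
Hypothesis Hg : good h C.

Definition bt (c : R) : R := beta h c (nxt C c).

Lemma bt_X c : In c C -> X (bt c).
Proof.
  intros Hc. pose proof (pcb_piece h C c Hh HC Hg Hc) as Hp.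
  pose proof (piece_inf _ _ _ Hp) as [Hlb Hgl].
  destruct Hp as (A & B & D & E & F & G).
  set (m := (c + nxt C c) / 2).
  assert (Hm : c < m < nxt C c) by (unfold m; lra).
  split.
  - apply Hgl. intros y [x [Hx ->]]. apply G; auto.
  - assert (bt c <= h m) by (apply Hlb; exists m; auto). destruct (G m Hm). unfold bt in *; lra.
Qed.

Lemma G1 c d x : In c C -> In d C -> d < x < nxt C d -> h x <> bt c.
Proof.
  intros Hc Hd Hx E.
  destruct (Req_dec c d) as [->|Hcd].
  { apply (piece_notin h d (nxt C d) x); auto. apply pcb_piece; auto. }
  pose proof (pcb_piece h C c Hh HC Hg Hc) as Pc.
  pose proof (pcb_piece h C d Hh HC Hg Hd) as Pd.
  assert (exists x', d < x' < nxt C d /\ h x < h x') as [x' [Hx' Hxx']].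
  { destruct (piece_mono _ _ _ Pd) as [M|M].
    - exists ((x + nxt C d) / 2). split; [lra|]. apply M; lra.
    - exists ((d + x) / 2). split; [lra|]. apply M; lra. }
  set (x0 := (c + nxt C c) / 2).
  assert (Hx0 : c < x0 < nxt C c) by (destruct Pc; unfold x0; lra).
  pose proof (piece_gt _ _ _ x0 Pc Hx0).
  set (y := (bt c + Rmin (h x') (h x0)) / 2).
  assert (bt c < Rmin (h x') (h x0)) by (apply Rmin_glb_lt; unfold bt in *; lra).
  pose proof (Rmin_l (h x') (h x0)). pose proof (Rmin_r (h x') (h x0)).
  destruct (piece_img h c (nxt C c) x0 y Pc Hx0) as [u [Hu Eu]]; [unfold y, bt in *; lra|].
  assert (Hbd : beta h d (nxt C d) <= h x) by (apply (piece_inf _ _ _ Pd); exists x; auto).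
  destruct (piece_img h d (nxt C d) x' y Pd Hx') as [v [Hv Ev]]; [unfold y, bt in *; lra|].
  assert (u = v).
  { apply (pcb_inj h); auto.
    - destruct Pc as (A & B & D' & _). split; lra.
    - destruct Pd as (A & B & D' & _). split; lra.
    - congruence. }
  subst v. apply (pieces_disj C c d u); auto.
Qed.

Lemma G2 c : In c C -> In (bt c) (map h C).
Proof.
  intros Hc. destruct (pcb_surj h (bt c) Hh (bt_X c Hc)) as [x [Hx Ex]].
  destruct (classic (In x C)) as [Hin|Hnin].
  - rewrite <- Ex. apply in_map; auto.
  - destruct (cover C x HC Hx Hnin) as [d [Hd Hdx]].
    exfalso. apply (G1 c d x); auto.
Qed.

Lemma bt_inj : injC bt C.
Proof.
  intros c d Hc Hd E. destruct (Req_dec c d) as [|Hcd]; auto. exfalso.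
  pose proof (pcb_piece h C c Hh HC Hg Hc) as Pc.
  pose proof (pcb_piece h C d Hh HC Hg Hd) as Pd.
  set (x0 := (c + nxt C c) / 2).
  assert (Hx0 : c < x0 < nxt C c) by (destruct Pc; unfold x0; lra).
  set (x1 := (d + nxt C d) / 2).
  assert (Hx1 : d < x1 < nxt C d) by (destruct Pd; unfold x1; lra).
  pose proof (piece_gt _ _ _ x0 Pc Hx0). pose proof (piece_gt _ _ _ x1 Pd Hx1).
  unfold bt in E.
  set (y := (beta h c (nxt C c) + Rmin (h x0) (h x1)) / 2).
  assert (beta h c (nxt C c) < Rmin (h x0) (h x1)) by (apply Rmin_glb_lt; lra).
  pose proof (Rmin_l (h x0) (h x1)). pose proof (Rmin_r (h x0) (h x1)).
  destruct (piece_img h c (nxt C c) x0 y Pc Hx0) as [u [Hu Eu]]; [unfold y; lra|].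
  destruct (piece_img h d (nxt C d) x1 y Pd Hx1) as [v [Hv Ev]]; [unfold y; lra|].
  assert (u = v).
  { apply (pcb_inj h); auto.
    - destruct Pc as (A & B & D' & _). split; lra.
    - destruct Pd as (A & B & D' & _). split; lra.
    - congruence. }
  subst v. apply (pieces_disj C c d u); auto.
Qed.

Lemma h_inj : injC h C.
Proof. intros x y Hx Hy. apply pcb_inj; auto; apply HC; auto. Qed.

End Cut.

Lemma NoDup_map_injC (f : R -> R) l : NoDup l -> injC f l -> NoDup (map f l).
Proof.
  induction l; simpl; intros ND Hi; constructor.
  - inversion ND; subst. intro Hin. apply in_map_iff in Hin as [y [Ey Hy]].
    assert (y = a) by (apply Hi; simpl; auto). subst; contradiction.
  - inversion ND; subst. apply IHl; auto. intros x y Hx Hy; apply Hi; simpl; auto.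
Qed.

Lemma G4 h C : PCB h -> cutset C -> good h C -> Permutation (map h C) (map (bt h C) C).
Proof.
  intros Hh HC Hg. apply Permutation_sym. apply NoDup_Permutation_bis.
  - apply NoDup_map_injC; [apply HC|]. apply bt_inj; auto.
  - rewrite !length_map; auto.
  - intros y Hy. apply in_map_iff in Hy as [c [<- Hc]]. apply G2; auto.
Qed.

Definition decb (h : R -> R) (a b : R) : bool :=
  if excluded_middle_informative (decreasing_on h a b) then true else false.

Definition E (h : R -> R) (C : list R) : bool :=
  xorb (xsum C (fun c => decb h c (nxt C c))) (Inv h (bt h C) C).

Lemma decb_true h a b : decreasing_on h a b -> decb h a b = true.
Proof. unfold decb; destruct excluded_middle_informative; auto; contradiction. Qed.
Lemma decb_false h a b : ~ decreasing_on h a b -> decb h a b = false.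
Proof. unfold decb; destruct excluded_middle_informative; auto; contradiction. Qed.

Lemma Inv_ext p p' q q' C : (forall x, In x C -> p x = p' x) -> (forall x, In x C -> q x = q' x) ->
  Inv p q C = Inv p' q' C.
Proof.
  intros H1 H2. unfold Inv. apply Dsum_ext. intros x y Hx Hy.
  rewrite (H1 x), (H1 y), (H2 x), (H2 y); auto.
Qed.

Lemma beta_eq h a b m : a < b -> (forall x, a < x < b -> 0 <= h x) ->
  is_inf (img h a b) m -> beta h a b = m.
Proof. intros. eapply is_inf_unique; eauto. apply beta_spec; auto. Qed.

Lemma swap_in (K : list R) a c x : In a K -> In c K -> In x K -> In (swap a c x) K.
Proof. intros. unfold swap. destruct (Req_dec_T x a), (Req_dec_T x c); auto. Qed.
Lemma swap_invol a c x : swap a c (swap a c x) = x.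
Proof.
  unfold swap. destruct (Req_dec_T x a) as [->|H1].
  - destruct (Req_dec_T c a); auto. destruct (Req_dec_T c c); congruence.
  - destruct (Req_dec_T x c) as [->|H2].
    + destruct (Req_dec_T a a); congruence.
    + destruct (Req_dec_T x a); [congruence|]. destruct (Req_dec_T x c); congruence.
Qed.

Lemma injC_swap f K a c : injC f K -> In a K -> In c K -> injC (fun x => f (swap a c x)) K.
Proof.
  intros Hf Ha Hc x y Hx Hy E.
  rewrite <- (swap_invol a c x), <- (swap_invol a c y). f_equal. apply Hf; auto; apply swap_in; auto.
Qed.

Lemma good_cons h C c : good h C -> good h (c :: C).
Proof. intros H x Hx Hn. apply H; auto. intro; apply Hn; right; auto. Qed.

Lemma E_refine h C c : PCB h -> cutset C -> good h C -> X c -> ~ In c C -> E h (c :: C) = E h C.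
Proof.
  intros Hh HC Hg Hc HcC.
  pose proof (cutset_lt1 C HC) as Hlt.
  destruct (cover C c HC Hc HcC) as [a [Ha [Hac Hcb]]].
  set (b := nxt C a) in *.
  assert (HC' : cutset (c :: C)).
  { destruct HC as (ND & H0 & HX). split; [constructor; auto|]. split; [right; auto|].
    intros d [<-|Hd]; auto. }
  pose proof (good_cons h C c Hg) as Hg'.
  assert (Hlt' : forall d, In d (c :: C) -> d < 1) by (apply cutset_lt1; auto).
  assert (Hb1 : b <= 1) by apply nxt_le1.
  assert (HaX : X a) by (apply HC; auto).
  assert (Hc1 : 0 <= c < 1) by exact Hc. assert (Ha1 : 0 <= a < 1) by exact HaX.
  assert (N1 : nxt (c :: C) a = c).
  { apply nxt_char; [lra | auto | right; left; auto | lra | lra | ].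
    intros d [<-|Hd] Had; [lra|]. pose proof (nxt_le C a d Hd Had). fold b in H. lra. }
  assert (N2 : nxt (c :: C) c = b).
  { apply nxt_char; [lra | auto | | lra | lra | ].
    - destruct (nxt_in C a); auto. right; right; auto.
    - intros d [<-|Hd] Hcd; [lra|]. apply nxt_le; auto; lra. }
  assert (N3 : forall d, In d C -> d <> a -> nxt (c :: C) d = nxt C d).
  { intros d Hd Hda. apply nxt_char; [ | auto | | | | ].
    - apply Hlt; auto.
    - destruct (nxt_in C d); [left|right; right]; auto.
    - apply nxt_gt; auto.
    - apply nxt_le1.
    - intros e [<-|He] Hde; [|apply nxt_le; auto].
      destruct (Rle_or_lt (nxt C d) c) as [|Hlt2]; auto. exfalso.
      apply (pieces_disj C a d c); auto. }
  destruct (in_split _ _ Ha) as [l1 [l2 EC]].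
  set (C0 := l1 ++ l2).
  assert (PC : Permutation C (a :: C0)) by (rewrite EC; apply Permutation_sym, Permutation_middle).
  assert (HaC0 : ~ In a C0).
  { intro. pose proof (Permutation_NoDup PC (proj1 HC)). inversion H0; auto. }
  assert (HC0 : forall d, In d C0 -> In d C /\ d <> a).
  { intros d Hd. split; [apply (Permutation_in _ (Permutation_sym PC)); right; auto|].
    intro; subst; auto. }
  pose proof (pcb_piece h C a Hh HC Hg Ha) as Pa. fold b in Pa.
  assert (Hcc : continuity_pt h c) by (apply Hg; auto; destruct HC as (_ & H0 & _); split; [destruct Hc as [Hc0 _]; destruct Hc0; auto; subst; contradiction| apply Hc]).
  assert (Hpos : forall u v, a <= u -> v <= b -> forall x, u < x < v -> 0 <= h x).
  { intros u v Hu Hv x Hx. destruct Pa as (_ & _ & _ & _ & _ & P6). apply P6; lra. }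
  assert (XS : forall f : R -> bool, xsum (c :: C) f = xorb (f c) (xorb (f a) (xsum C0 f))).
  { intros f. simpl. rewrite (xsum_perm _ _ _ PC). reflexivity. }
  assert (XS' : forall f : R -> bool, xsum C f = xorb (f a) (xsum C0 f)).
  { intros f. rewrite (xsum_perm _ _ _ PC). reflexivity. }
  unfold E. rewrite XS, XS', N1, N2.
  rewrite (xsum_ext C0 (fun d => decb h d (nxt (c :: C) d)) (fun d => decb h d (nxt C d))).
  2:{ intros d Hd. destruct (HC0 d Hd). rewrite N3; auto. }
  fold b.
  set (bh := fun x => if Req_dec_T x c then h c else bt h C x).
  assert (HinjK : injC h (c :: C)).
  { intros x y Hx Hy. apply pcb_inj; auto; destruct Hx as [<-|Hx]; auto; destruct Hy as [<-|Hy]; auto;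
    try (apply HC; auto). }
  assert (Ibh : Inv h bh (c :: C) = Inv h (bt h C) C).
  { rewrite Inv_fix.
    - apply Inv_ext; auto. intros x Hx. unfold bh. destruct (Req_dec_T x c); auto. subst; contradiction.
    - unfold bh. destruct (Req_dec_T c c); congruence.
    - rewrite (map_ext_in bh (bt h C)). apply G4; auto.
      intros x Hx. unfold bh. destruct (Req_dec_T x c); auto. subst; contradiction.
    - auto.
    - intros x y Hx Hy. unfold bh.
      destruct (Req_dec_T x c) as [Ex|Ex], (Req_dec_T y c) as [Ey|Ey]; try congruence.
      + intros E. destruct Hy as [|Hy]; [congruence|].
        pose proof (G2 h C Hh HC Hg y Hy) as G. rewrite <- E in G.
        apply in_map_iff in G as [e [Ee He]]. assert (c = e) by (apply HinjK; simpl; auto).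
        subst; contradiction.
      + intros E. destruct Hx as [|Hx]; [congruence|].
        pose proof (G2 h C Hh HC Hg x Hx) as G. rewrite E in G.
        apply in_map_iff in G as [e [Ee He]]. assert (c = e) by (apply HinjK; simpl; auto).
        subst; contradiction.
      + intros E. destruct Hx as [|Hx]; [congruence|]. destruct Hy as [|Hy]; [congruence|].
        apply (bt_inj h C Hh HC Hg); auto. }
  assert (bta : bt h C a = beta h a b) by reflexivity.
  destruct (piece_mono _ _ _ Pa) as [M|M].
  - rewrite !decb_false.
    2: apply (incr_not_decr h a b); auto; lra.
    2: apply (incr_not_decr h a b); auto; lra.
    2: apply (incr_not_decr h a b); auto; lra.
    f_equal.
    rewrite <- Ibh. apply Inv_ext; auto.
    intros x [<-|Hx]; unfold bh, bt.
    + destruct (Req_dec_T c c); [|congruence]. rewrite N2.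
      apply beta_eq; [lra| apply Hpos; lra|]. apply (inf_L2 h a b); auto.
    + destruct (Req_dec_T x c); [subst; contradiction|].
      destruct (Req_dec x a) as [->|Hxa].
      * rewrite N1. apply beta_eq; [lra|apply Hpos; lra|]. apply (inf_L1 h a b); auto.
        apply piece_inf; auto.
      * rewrite N3; auto.
  - rewrite !decb_true.
    2: apply (decr_sub h a b); auto; lra.
    2: apply (decr_sub h a b); auto; lra.
    2: apply (decr_sub h a b); auto; lra.
    set (K := c :: C).
    assert (NDK : NoDup K) by apply HC'.
    assert (HaK : In a K) by (right; auto). assert (HcK : In c K) by (left; auto).
    assert (Hac' : a <> c) by lra.
    assert (Ext : Inv h (bt h K) K = Inv h (fun x => bh (swap a c x)) K).
    { apply Inv_ext; auto. intros x [<-|Hx]; unfold bh, bt.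
      - rewrite swap_c. destruct (Req_dec_T a c); [lra|]. unfold K. rewrite N2.
        apply beta_eq; [lra|apply Hpos; lra|]. apply (inf_L4 h a b); auto. apply piece_inf; auto.
      - destruct (Req_dec x a) as [->|Hxa].
        + rewrite swap_a. destruct (Req_dec_T c c); [|congruence]. unfold K; rewrite N1.
          apply beta_eq; [lra|apply Hpos; lra|]. apply (inf_L3 h a b); auto.
        + assert (x <> c) by (intro; subst; contradiction).
          rewrite swap_o by auto. destruct (Req_dec_T x c); [contradiction|]. unfold K; rewrite N3; auto. }
    fold K. rewrite Ext.
    assert (Hbh : injC bh K).
    { intros x y Hx Hy Exy.
      unfold bh in Exy.
      destruct (Req_dec_T x c) as [Ex|Ex], (Req_dec_T y c) as [Ey|Ey]; try congruence.
      + destruct Hy as [|Hy]; [congruence|].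
        pose proof (G2 h C Hh HC Hg y Hy) as G. rewrite <- Exy in G.
        apply in_map_iff in G as [e [Ee He]]. assert (c = e) by (apply HinjK; simpl; auto).
        subst; contradiction.
      + destruct Hx as [|Hx]; [congruence|].
        pose proof (G2 h C Hh HC Hg x Hx) as G. rewrite Exy in G.
        apply in_map_iff in G as [e [Ee He]]. assert (c = e) by (apply HinjK; simpl; auto).
        subst; contradiction.
      + destruct Hx as [|Hx]; [congruence|]. destruct Hy as [|Hy]; [congruence|].
        apply (bt_inj h C Hh HC Hg); auto. }
    rewrite (Inv_mult h (fun x => h (swap a c x)) (fun x => bh (swap a c x)) K HinjK
               (injC_swap h K a c HinjK HaK HcK) (injC_swap bh K a c Hbh HaK HcK)).
    rewrite (Inv_swap_odd K h a c NDK HaK HcK Hac' HinjK).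
    assert (Inv (fun x => h (swap a c x)) (fun x => bh (swap a c x)) K = Inv h bh K).
    { unfold Inv. apply (Dsum_swap K a c (fun u v => Rltb (h u) (h v) && Rltb (bh v) (bh u))); auto. }
    rewrite H. unfold K. rewrite Ibh.
    destruct (xsum C0 _), (Inv h (bt h C) C); reflexivity.
Qed.

Lemma nxt_perm C C' x : (forall d, In d C <-> In d C') -> x < 1 -> (forall d, In d C -> d < 1) ->
  nxt C x = nxt C' x.
Proof.
  intros Hi Hx Hlt. symmetry. apply nxt_char.
  - auto.
  - intros d Hd; apply Hlt, Hi; auto.
  - destruct (nxt_in C x); auto. right; apply Hi; auto.
  - apply nxt_gt; auto.
  - apply nxt_le1.
  - intros d Hd Hxd. apply nxt_le; auto. apply Hi; auto.
Qed.

Lemma E_perm h C C' : cutset C -> Permutation C C' -> E h C = E h C'.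
Proof.
  intros HC HP.
  assert (Hi : forall d, In d C <-> In d C') by (intros; split; apply Permutation_in; auto; apply Permutation_sym; auto).
  pose proof (cutset_lt1 C HC) as Hlt.
  assert (N : forall x, In x C -> nxt C x = nxt C' x) by (intros; apply nxt_perm; auto).
  unfold E. f_equal.
  - rewrite (xsum_perm _ _ _ HP). apply xsum_ext. intros x Hx. rewrite N; auto. apply Hi; auto.
  - unfold Inv. rewrite (Dsum_perm _ _ _ HP). apply Dsum_ext. intros x y Hx Hy.
    unfold bt. rewrite !N; auto; apply Hi; auto.
Qed.

Lemma add_points_E h : PCB h -> forall l C, cutset C -> good h C -> (forall x, In x l -> X x) ->
  exists C', cutset C' /\ good h C' /\ E h C' = E h C /\ (forall x, In x C' <-> In x C \/ In x l).
Proof.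
  intros Hh. induction l as [|p l IH]; intros C HC Hg Hl.
  - exists C. split; auto. split; auto. split; auto. intros x; simpl; tauto.
  - destruct (classic (In p C)) as [Hp|Hp].
    + destruct (IH C HC Hg) as [C' (A & B & D & F)]; [intros; apply Hl; right; auto|].
      exists C'. split; auto. split; auto. split; auto. intros x. rewrite F. simpl.
      split; [tauto|]. intros [H|[<-|H]]; auto.
    + assert (HC1 : cutset (p :: C)).
      { destruct HC as (ND & H0 & HX). split; [constructor; auto|]. split; [right; auto|].
        intros d [<-|Hd]; auto. apply Hl; left; auto. }
      destruct (IH (p :: C) HC1 (good_cons h C p Hg)) as [C' (A & B & D & F)]; [intros; apply Hl; right; auto|].
      exists C'. split; auto. split; auto. split.
      * rewrite D. apply E_refine; auto. apply Hl; left; auto.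
      * intros x. rewrite F. simpl. tauto.
Qed.

Lemma E_indep h C1 C2 : PCB h -> cutset C1 -> good h C1 -> cutset C2 -> good h C2 -> E h C1 = E h C2.
Proof.
  intros Hh H1 G1 H2 G2.
  destruct (add_points_E h Hh C2 C1 H1 G1) as [C' (A & B & D & F)]; [apply H2|].
  destruct (add_points_E h Hh C1 C2 H2 G2) as [C'' (A' & B' & D' & F')]; [apply H1|].
  rewrite <- D, <- D'. apply E_perm; auto. apply NoDup_Permutation; [apply A|apply A'|].
  intros x; rewrite F, F'; tauto.
Qed.

Lemma add_points_gen : forall l C, cutset C -> (forall x, In x l -> X x) ->
  exists C', cutset C' /\ (forall x, In x C' <-> In x C \/ In x l).
Proof.
  induction l as [|p l IH]; intros C HC Hl.
  - exists C. split; auto. intros x; simpl; tauto.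
  - destruct (classic (In p C)) as [Hp|Hp].
    + destruct (IH C HC) as [C' (A & F)]; [intros; apply Hl; right; auto|].
      exists C'. split; auto. intros x. rewrite F. simpl.
      split; [tauto|]. intros [H|[<-|H]]; auto.
    + assert (HC1 : cutset (p :: C)).
      { destruct HC as (ND & H0 & HX). split; [constructor; auto|]. split; [right; auto|].
        intros d [<-|Hd]; auto. apply Hl; left; auto. }
      destruct (IH (p :: C) HC1) as [C' (A & F)]; [intros; apply Hl; right; auto|].
      exists C'. split; auto. intros x. rewrite F. simpl. tauto.
Qed.

Lemma contX_cont h x : 0 < x < 1 -> contX_at h x -> continuity_pt h x.
Proof.
  intros Hx H eps He. destruct (H eps He) as [d [Hd Hy]].
  exists (Rmin d (Rmin x (1 - x))). split.
  - apply Rmin_pos; auto. apply Rmin_pos; lra.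
  - intros y [[_ _] Hyx]. unfold R_dist in *. simpl in *. unfold R_dist in *.
    pose proof (Rmin_l d (Rmin x (1 - x))). pose proof (Rmin_r d (Rmin x (1 - x))).
    pose proof (Rmin_l x (1 - x)). pose proof (Rmin_r x (1 - x)).
    apply Hy.
    + apply Rabs_def2 in Hyx. split; lra.
    + lra.
Qed.

Definition Xb (x : R) : bool := if Rle_dec 0 x then (if Rlt_dec x 1 then true else false) else false.
Lemma Xb_true x : Xb x = true <-> X x.
Proof. unfold Xb, X. destruct (Rle_dec 0 x), (Rlt_dec x 1); split; intros; try discriminate; auto; try lra. Qed.

Lemma cutset0 : cutset [0].
Proof. split; [constructor; [simpl; auto|constructor]|]. split; [left; auto|]. intros c [<-|[]]. split; lra. Qed.

Lemma good_exists h : PCB h -> exists C, cutset C /\ good h C.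
Proof.
  intros Hh. destruct Hh as (_ & _ & _ & _ & [S HS]).
  destruct (add_points_gen (filter Xb S) [0] cutset0) as [C' [A F]].
  { intros x Hx. apply filter_In in Hx. apply Xb_true; tauto. }
  exists C'. split; auto. intros x Hx Hn. apply contX_cont; auto. apply HS.
  - split; lra.
  - intro HxS. apply Hn. apply F. right. apply filter_In. split; auto. apply Xb_true. split; lra.
Qed.

Definition iota (h : R -> R) : bool :=
  epsilon (inhabits false) (fun b => exists C, cutset C /\ good h C /\ E h C = b).

Lemma iota_spec h C : PCB h -> cutset C -> good h C -> iota h = E h C.
Proof.
  intros Hh HC Hg. unfold iota.
  destruct (epsilon_spec (inhabits false) (fun b => exists C, cutset C /\ good h C /\ E h C = b)) as [C' (A & B & D)].
  - exists (E h C), C. auto.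
  - rewrite <- D. apply E_indep; auto.
Qed.

Lemma is_inf_ext (E1 E2 : R -> Prop) m : (forall y, E1 y <-> E2 y) -> is_inf E1 m -> is_inf E2 m.
Proof.
  intros Hi [A B]. split.
  - intros y Hy. apply A, Hi; auto.
  - intros m' Hm'. apply B. intros y Hy. apply Hm', Hi; auto.
Qed.

Section Comp.
Variables g h : R -> R.
Variable C : list R.
Hypothesis Hgp : PCB g.
Hypothesis Hhp : PCB h.
Hypothesis HC : cutset C.
Hypothesis HgC : good h C.

Local Notation bth := (bt h C).
Local Notation B := (map (bt h C) C).

Lemma B_lt1 : forall d, In d B -> d < 1.
Proof. intros d Hd. apply in_map_iff in Hd as [c [<- Hc]]. apply (bt_X h C Hhp HC HgC c Hc). Qed.

Lemma G5 c y : In c C -> (img h c (nxt C c) y <-> bth c < y < nxt B (bth c)).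
Proof.
  intros Hc. pose proof (pcb_piece h C c Hhp HC HgC Hc) as Pc.
  pose proof (bt_X h C Hhp HC HgC c Hc) as Hbx. unfold X in Hbx.
  assert (HbB : In (bth c) B) by (apply in_map; auto).
  assert (Hgt : bth c < nxt B (bth c)) by (apply nxt_gt; [lra|apply B_lt1]).
  pose proof (nxt_le1 B (bth c)).
  split.
  - intros [x [Hx ->]]. split; [apply piece_gt; auto|].
    assert (HxX : X x) by (destruct Pc as (A1 & A2 & A3 & _); split; lra).
    pose proof (pcb_X h x Hhp HxX) as HhX. unfold X in HhX.
    destruct (nxt_in B (bth c)) as [E1|E1]; [lra|].
    apply in_map_iff in E1 as [d [Ed Hd]].
    destruct (Rlt_or_le (h x) (nxt B (bth c))) as [|Hle]; auto. exfalso.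
    destruct (Rle_lt_or_eq_dec _ _ Hle) as [Hl|He].
    + destruct (piece_img h c (nxt C c) x (nxt B (bth c)) Pc Hx) as [x' [Hx' Ex']]; [unfold bth in *; lra|].
      apply (G1 h C Hhp HC HgC d c x'); auto. rewrite Ex'. rewrite <- Ed. reflexivity.
    + apply (G1 h C Hhp HC HgC d c x); auto. rewrite <- He, <- Ed. reflexivity.
  - intros [H1 H2].
    assert (HyX : X y) by (split; lra).
    destruct (pcb_surj h y Hhp HyX) as [x [HxX Ex]].
    destruct (classic (In x C)) as [HxC|HxC].
    + exfalso. assert (In y B).
      { apply (Permutation_in _ (G4 h C Hhp HC HgC)). rewrite <- Ex. apply in_map; auto. }
      apply (nxt_noC B (bth c) y); auto.
    + destruct (cover C x HC HxX HxC) as [d [Hd Hdx]].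
      destruct (Req_dec d c) as [->|Hdc]; [exists x; auto|]. exfalso.
      pose proof (pcb_piece h C d Hhp HC HgC Hd) as Pd.
      pose proof (piece_gt h d (nxt C d) x Pd Hdx) as Hbd.
      assert (bth d <> bth c) by (intro E; apply Hdc; apply (bt_inj h C Hhp HC HgC); auto).
      destruct (Rtotal_order (bth c) (bth d)) as [Hl|[He|Hg]].
      * apply (nxt_noC B (bth c) (bth d)); [apply in_map; auto|]. unfold bth in *. split; lra.
      * congruence.
      * destruct (piece_img h d (nxt C d) x (bth c) Pd Hdx) as [x' [Hx' Ex']]; [unfold bth in *; lra|].
        apply (G1 h C Hhp HC HgC c d x'); auto.
Qed.

Lemma B_cutset : (forall d, In d C -> True) -> In 0 (map h C) -> cutset B.
Proof.
  intros _ H0. split; [|split].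
  - apply NoDup_map_injC; [apply HC|]. apply bt_inj; auto.
  - apply (Permutation_in _ (G4 h C Hhp HC HgC)); auto.
  - intros d Hd. apply in_map_iff in Hd as [c [<- Hc]]. apply bt_X; auto.
Qed.

Hypothesis HB : cutset B.
Hypothesis HgB : good g B.
Hypothesis Hghp : PCB (fun x => g (h x)).
Hypothesis HghC : good (fun x => g (h x)) C.

Lemma E_comp : E (fun x => g (h x)) C = xorb (E g B) (E h C).
Proof.
  set (gh := fun x => g (h x)).
  set (btg := bt g B).
  assert (Pg : forall c, In c C -> piece g (bth c) (nxt B (bth c))).
  { intros c Hc. apply pcb_piece; auto. apply in_map; auto. }
  assert (Ph : forall c, In c C -> piece h c (nxt C c)) by (intros; apply pcb_piece; auto).
  assert (Pgh : forall c, In c C -> piece gh c (nxt C c)) by (intros; apply pcb_piece; auto).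
  assert (Hmap : forall c x, In c C -> c < x < nxt C c -> bth c < h x < nxt B (bth c)).
  { intros c x Hc Hx. apply G5; auto. exists x; auto. }
  assert (BT : forall c, In c C -> bt gh C c = btg (bth c)).
  { intros c Hc. unfold bt at 1. apply beta_eq.
    - destruct (Pgh c Hc); auto.
    - intros x Hx. destruct (Pgh c Hc) as (_ & _ & _ & _ & _ & P6). apply P6; auto.
    - apply (is_inf_ext (img g (bth c) (nxt B (bth c)))).
      + intros z. split.
        * intros [y [Hy ->]]. destruct (proj2 (G5 c y Hc) Hy) as [x [Hx ->]]. exists x; auto.
        * intros [x [Hx ->]]. exists (h x). split; auto.
      + apply piece_inf; auto. }
  assert (DEC : forall c, In c C ->
     decb gh c (nxt C c) = xorb (decb g (bth c) (nxt B (bth c))) (decb h c (nxt C c))).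
  { intros c Hc. pose proof (Pg c Hc) as PG. pose proof (Ph c Hc) as PH.
    pose proof (Hmap c) as Hm.
    assert (Hcn : c < nxt C c) by (destruct PH; auto).
    assert (Hbn : bth c < nxt B (bth c)) by (destruct PG; auto).
    assert (NG : incr_on g (bth c) (nxt B (bth c)) -> ~ decreasing_on g (bth c) (nxt B (bth c))).
    { intros M. apply (incr_not_decr g (bth c) (nxt B (bth c))); auto; lra. }
    assert (NH : incr_on h c (nxt C c) -> ~ decreasing_on h c (nxt C c)).
    { intros M. apply (incr_not_decr h c (nxt C c)); auto; lra. }
    assert (NGH : incr_on gh c (nxt C c) -> ~ decreasing_on gh c (nxt C c)).
    { intros M. apply (incr_not_decr gh c (nxt C c)); auto; lra. }
    destruct (piece_mono _ _ _ PH) as [MH|MH], (piece_mono _ _ _ PG) as [MG|MG].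
    - rewrite (decb_false g _ _ (NG MG)), (decb_false h _ _ (NH MH)), (decb_false gh); [reflexivity|].
      apply NGH. intros x y H1 H2 H3. unfold gh. apply MG.
      + apply (Hm x); auto; lra.
      + apply MH; auto.
      + apply (Hm y); auto; lra.
    - rewrite (decb_true g _ _ MG), (decb_false h _ _ (NH MH)), (decb_true gh); [reflexivity|].
      intros x y H1 H2 H3. unfold gh. apply MG.
      + apply (Hm x); auto; lra.
      + apply MH; auto.
      + apply (Hm y); auto; lra.
    - rewrite (decb_false g _ _ (NG MG)), (decb_true h _ _ MH), (decb_true gh); [reflexivity|].
      intros x y H1 H2 H3. unfold gh. apply MG.
      + apply (Hm y); auto; lra.
      + apply MH; auto.
      + apply (Hm x); auto; lra.
    - rewrite (decb_true g _ _ MG), (decb_true h _ _ MH), (decb_false gh); [reflexivity|].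
      apply NGH. intros x y H1 H2 H3. unfold gh. apply MG.
      + apply (Hm y); auto; lra.
      + apply MH; auto.
      + apply (Hm x); auto; lra. }
  assert (HXC : forall x, In x C -> X x) by apply HC.
  assert (Ighinj : injC gh C) by (intros x y Hx Hy; apply pcb_inj; auto).
  assert (Ihinj : injC h C) by (apply h_inj; auto).
  assert (Ibinj : injC bth C) by (apply bt_inj; auto).
  assert (HgX : forall u v, In u (map h C) -> In v (map h C) -> g u = g v -> u = v).
  { intros u v Hu Hv. apply in_map_iff in Hu as [x [<- Hx]]. apply in_map_iff in Hv as [y [<- Hy]].
    apply pcb_inj; auto; apply pcb_X; auto. }
  assert (HgB' : forall u v, In u (map bth C) -> In v (map bth C) -> g u = g v -> u = v).
  { intros u v Hu Hv. apply pcb_inj; auto; apply HB; auto. }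
  assert (Igb : injC (fun x => g (bth x)) C) by (apply injC_comp; auto).
  assert (Igbb : injC (fun x => btg (bth x)) C).
  { apply injC_comp; auto. intros u v Hu Hv. apply (bt_inj g B); auto. }
  unfold E.
  rewrite (xsum_ext C _ _ DEC), xsum_xor.
  rewrite (Inv_ext gh gh (bt gh C) (fun x => btg (bth x)) C); [|auto|exact BT].
  rewrite (Inv_mult gh (fun x => g (bth x)) (fun x => btg (bth x)) C Ighinj Igb Igbb).
  unfold gh. rewrite (Inv_conj g h bth C (G4 h C Hhp HC HgC) Ihinj Ibinj HgX).
  rewrite xsum_map.
  assert (Inv g btg B = Inv (fun x => g (bth x)) (fun x => btg (bth x)) C).
  { unfold Inv. rewrite Dsum_map. reflexivity. }
  fold btg. rewrite H.
  destruct (xsum C (fun x => decb g (bth x) (nxt B (bth x)))), (xsum C (fun x => decb h x (nxt C x))),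
    (Inv h bth C), (Inv (fun x => g (bth x)) (fun x => btg (bth x)) C); reflexivity.
Qed.

End Comp.

Definition hinv (h : R -> R) (y : R) : R := epsilon (inhabits 0) (fun x => X x /\ h x = y).

Lemma hinv_spec h y : PCB h -> X y -> X (hinv h y) /\ h (hinv h y) = y.
Proof.
  intros Hh Hy. unfold hinv. apply epsilon_spec. apply pcb_surj; auto.
Qed.

Lemma iota_comp g h : PCB g -> PCB h -> PCB (fun x => g (h x)) ->
  iota (fun x => g (h x)) = xorb (iota g) (iota h).
Proof.
  intros Hg Hh Hgh.
  destruct (good_exists g Hg) as [D [HD GD]].
  destruct (good_exists h Hh) as [Ch [HCh GCh]].
  destruct (add_points_E h Hh (map (hinv h) D) Ch HCh GCh) as [C (HC & GC & _ & FC)].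
  { intros x Hx. apply in_map_iff in Hx as [d [<- Hd]]. apply hinv_spec; auto. apply HD; auto. }
  assert (HDC : forall d, In d D -> In (hinv h d) C /\ h (hinv h d) = d).
  { intros d Hd. split; [apply FC; right; apply in_map; auto|]. apply hinv_spec; auto. apply HD; auto. }
  assert (HDB : forall d, In d D -> In d (map (bt h C) C)).
  { intros d Hd. apply (Permutation_in _ (G4 h C Hh HC GC)). destruct (HDC d Hd) as [A B].
    rewrite <- B. apply in_map; auto. }
  assert (HB : cutset (map (bt h C) C)).
  { apply B_cutset; auto. destruct (HDC 0 (proj1 (proj2 HD))) as [A B]. rewrite <- B. apply in_map; auto. }
  assert (GB : good g (map (bt h C) C)).
  { intros x Hx Hn. apply GD; [auto|]. intro Hd; apply Hn, HDB; auto. }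
  assert (GghC : good (fun x => g (h x)) C).
  { intros x Hx Hn.
    assert (Hnot : forall d, In d D -> h x <> d).
    { intros d Hd E. destruct (HDC d Hd) as [A B]. apply Hn.
      assert (x = hinv h d).
      { apply (pcb_inj h x (hinv h d) Hh). split; lra. apply hinv_spec; auto. apply HD; auto. congruence. }
      rewrite H; auto. }
    assert (HhX : X (h x)) by (apply pcb_X; auto; split; lra).
    unfold X in HhX.
    assert (h x <> 0) by (apply Hnot; apply HD).
    apply (continuity_pt_comp h g x).
    - apply GC; auto.
    - apply GD; [lra|]. intro Hd; apply (Hnot (h x)); auto. }
  rewrite (iota_spec _ C Hgh HC GghC), (iota_spec g _ Hg HB GB), (iota_spec h C Hh HC GC).
  apply E_comp; auto.
Qed.

Section Part.
Variable P : list R.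
Hypothesis Hlen : (0 < length P)%nat.
Hypothesis H0 : alpha P 0 = 0.
Hypothesis Hab : forall j, (j < length P)%nat -> alpha P j < bnd P j.

Lemma bnd_alpha j : (S j < length P)%nat -> bnd P j = alpha P (S j).
Proof. intros. unfold bnd, alpha. apply nth_indep; auto. Qed.

Lemma bnd_last j : (S j >= length P)%nat -> bnd P j = 1.
Proof. intros. unfold bnd. apply nth_overflow; lia. Qed.

Lemma alpha_incr : forall j k, (j < k)%nat -> (k < length P)%nat -> alpha P j < alpha P k.
Proof.
  intros j k Hjk Hk. induction k as [|k IH]; [lia|].
  rewrite <- bnd_alpha by auto. destruct (Nat.eq_dec j k) as [->|Hne].
  - apply Hab; lia.
  - pose proof (Hab k ltac:(lia)). specialize (IH ltac:(lia) ltac:(lia)). lra.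
Qed.

Lemma alpha_ge0 j : (j < length P)%nat -> 0 <= alpha P j.
Proof.
  intros Hj. destruct j; [rewrite H0; lra|]. rewrite <- H0. left. apply alpha_incr; lia.
Qed.

Lemma bnd_le1 j : (j < length P)%nat -> bnd P j <= 1.
Proof.
  intros Hj. revert Hj. induction j using (well_founded_induction (Nat.gt_wf (length P))).
  intros Hj. destruct (Nat.lt_ge_cases (S j) (length P)) as [Hl|Hl].
  - rewrite bnd_alpha by auto. pose proof (Hab (S j) Hl). pose proof (H (S j) ltac:(lia) Hl). lra.
  - rewrite bnd_last by auto. lra.
Qed.

Lemma alpha_X j : (j < length P)%nat -> X (alpha P j).
Proof. intros. split; [apply alpha_ge0; auto|]. pose proof (Hab j H). pose proof (bnd_le1 j H). lra. Qed.

Lemma P_cutset : cutset P.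
Proof.
  split; [|split].
  - apply NoDup_nth with (d := 0). intros i j Hi Hj E.
    destruct (Nat.lt_total i j) as [Hl|[He|Hg]]; auto.
    + pose proof (alpha_incr i j Hl Hj). unfold alpha in *. lra.
    + pose proof (alpha_incr j i Hg Hi). unfold alpha in *. lra.
  - rewrite <- H0. apply nth_In; auto.
  - intros c Hc. destruct (In_nth _ _ 0 Hc) as [j [Hj <-]]. apply alpha_X; auto.
Qed.

Lemma P_nxt j : (j < length P)%nat -> nxt P (alpha P j) = bnd P j.
Proof.
  intros Hj. apply nxt_char.
  - apply alpha_X; auto.
  - apply cutset_lt1, P_cutset.
  - destruct (Nat.lt_ge_cases (S j) (length P)) as [Hl|Hl].
    + right. rewrite bnd_alpha by auto. apply nth_In; auto.
    + left. apply bnd_last; auto.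
  - apply Hab; auto.
  - apply bnd_le1; auto.
  - intros d Hd Hjd. destruct (In_nth _ _ 0 Hd) as [k [Hk <-]]. fold (alpha P k) in *.
    destruct (Nat.lt_ge_cases j k) as [Hl|Hl].
    + destruct (Nat.eq_dec k (S j)) as [->|Hne].
      * rewrite bnd_alpha; auto; lra.
      * rewrite bnd_alpha by lia. left. apply alpha_incr; lia.
    + exfalso. destruct (Nat.eq_dec j k) as [->|Hne]; [lra|].
      pose proof (alpha_incr k j ltac:(lia) Hj). lra.
Qed.

Lemma P_good h : (forall j, (j < length P)%nat -> forall x, alpha P j < x < bnd P j -> continuity_pt h x) ->
  good h P.
Proof.
  intros Hc x Hx Hn. destruct (cover P x P_cutset ltac:(split; lra) Hn) as [d [Hd Hdx]].
  destruct (In_nth _ _ 0 Hd) as [j [Hj Ej]]. fold (alpha P j) in Ej. subst d.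
  rewrite P_nxt in Hdx by auto. apply (Hc j); auto.
Qed.

End Part.

Lemma assoc_cutset h P : assoc_partition h P -> cutset P /\ good h P.
Proof.
  intros (A & B & D & F). split; [apply P_cutset; auto|]. apply P_good; auto.
Qed.

Lemma nth_map_any {A B} (f : A -> B) l j d d0 : (j < length l)%nat -> nth j (map f l) d = f (nth j l d0).
Proof. intros. rewrite (nth_indep (map f l) d (f d0)) by (rewrite length_map; auto). apply map_nth. Qed.

Lemma lookup_combine (h f : R -> R) P a : injC h P -> In a P ->
  lookup (combine (map h P) (map f P)) (h a) = f a.
Proof.
  induction P as [|p P IH]; simpl; intros Hi Ha; [contradiction|].
  destruct (Req_dec_T (h a) (h p)) as [E|E].
  - assert (a = p) by (apply Hi; simpl; auto). subst; auto.
  - destruct Ha as [->|Ha]; [congruence|]. apply IH; auto. intros x y Hx Hy; apply Hi; simpl; auto.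
Qed.

Lemma inv_count_Inv (sigma : R -> R) (h : R -> R) P :
  Nat.odd (inv_count sigma (map h P)) =
  Inv h (fun x => sigma (h x)) P.
Proof.
  unfold inv_count, Inv. rewrite odd_sum.
  rewrite <- (Dsum_map P h (fun x y => Rltb x y && Rltb (sigma y) (sigma x))).
  unfold Dsum. apply xsum_ext. intros x _. rewrite odd_sum. apply xsum_ext. intros y _.
  unfold Rltb. destruct (Rlt_dec x y), (Rlt_dec (sigma y) (sigma x)); reflexivity.
Qed.

Lemma eps_formula h P decf : PCB h -> cutset P -> good h P ->
  (forall a, In a P -> decf a = decb h a (nxt P a)) ->
  xorb (Nat.odd (count_occ bool_dec (map decf P) true))
       (Nat.odd (inv_count (lookup (combine (map h P) (map (bt h P) P))) (map h P))) = E h P.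
Proof.
  intros Hh HC HG Hd. unfold E. f_equal.
  - rewrite odd_count_occ, xsum_map. apply xsum_ext; auto.
  - rewrite inv_count_Inv. apply Inv_ext; auto. intros x Hx. apply lookup_combine; auto.
    apply h_inj; auto.
Qed.

Lemma eps_hP_iff h P b : PCB h -> assoc_partition h P -> (eps_hP h P b <-> b = E h P).
Proof.
  intros Hh HP. destruct (assoc_cutset h P HP) as [HC HG].
  destruct HP as (Hlen & H0 & Hab & Hcont).
  assert (Hpc : forall j, (j < length P)%nat -> piece h (alpha P j) (bnd P j)).
  { intros j Hj. rewrite <- P_nxt by auto. apply pcb_piece; auto. apply nth_In; auto. }
  split.
  - intros (betas & decs & Lb & Ld & Hb & Hd & Eb).
    assert (Eb' : betas = map (bt h P) P).
    { apply nth_ext with (d := 0) (d' := 0); [rewrite length_map; auto|].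
      intros j Hj. rewrite Lb in Hj.
      rewrite (nth_map_any _ _ _ _ 0) by auto. fold (alpha P j). unfold bt. rewrite P_nxt by auto.
      eapply is_inf_unique; [apply Hb; auto|]. apply piece_inf; auto. }
    assert (Ed' : decs = map (fun a => decb h a (nxt P a)) P).
    { apply nth_ext with (d := false) (d' := false); [rewrite length_map; auto|].
      intros j Hj. rewrite Ld in Hj.
      rewrite (nth_map_any _ _ _ _ 0) by auto. fold (alpha P j). rewrite P_nxt by auto.
      specialize (Hd j Hj). unfold decb. destruct excluded_middle_informative as [D|D].
      + apply Hd; auto.
      + destruct (nth j decs false); auto. exfalso; apply D, Hd; auto. }
    simpl in Eb. rewrite Eb, Eb', Ed'. apply eps_formula; auto.
  - intros ->. exists (map (bt h P) P), (map (fun a => decb h a (nxt P a)) P).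
    split; [rewrite length_map; auto|]. split; [rewrite length_map; auto|]. split; [|split].
    + intros j Hj.
      rewrite (nth_map_any _ _ _ _ 0) by auto. fold (alpha P j). unfold bt. rewrite P_nxt by auto. apply piece_inf; auto.
    + intros j Hj.
      rewrite (nth_map_any _ _ _ _ 0) by auto. fold (alpha P j). rewrite P_nxt by auto.
      unfold decb. destruct excluded_middle_informative; split; intros; auto; discriminate.
    + simpl. symmetry. apply eps_formula; auto.
Qed.

Fixpoint ins (x : R) (l : list R) : list R :=
  match l with
  | [] => [x]
  | y :: l' => if Rlt_dec x y then x :: y :: l'
               else if Req_dec_T x y then y :: l' else y :: ins x l'
  end.

Definition rsort (l : list R) : list R := fold_right ins [] l.

Lemma ins_In x l z : In z (ins x l) <-> z = x \/ In z l.
Proof.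
  induction l as [|y l IH]; simpl.
  - split; [intros [->|[]]; auto|intros [->|[]]; auto].
  - destruct (Rlt_dec x y); simpl.
    + split; [intros [->|[->|H]]; auto|intros [->|[->|H]]; auto].
    + destruct (Req_dec_T x y) as [->|Hne]; simpl.
      * split; [intros [->|H]; auto|intros [->|[->|H]]; auto].
      * rewrite IH. split; [intros [->|[->|H]]; auto|intros [->|[->|H]]; auto].
Qed.

Lemma ins_sorted x l : StronglySorted Rlt l -> StronglySorted Rlt (ins x l).
Proof.
  induction l as [|y l IH]; simpl; intros H.
  - constructor; constructor.
  - inversion H; subst. destruct (Rlt_dec x y).
    + constructor; auto. constructor; auto. eapply Forall_impl; [|exact H3]. intros; simpl in *; lra.
    + destruct (Req_dec_T x y); auto. constructor; auto.
      apply Forall_forall. intros z Hz. apply ins_In in Hz as [->|Hz]; [lra|].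
      rewrite Forall_forall in H3; auto.
Qed.

Lemma rsort_In l z : In z (rsort l) <-> In z l.
Proof. induction l; simpl; [tauto|]. rewrite ins_In, IHl. split; intros [->|H]; auto. Qed.

Lemma rsort_sorted l : StronglySorted Rlt (rsort l).
Proof. induction l; simpl; [constructor|]. apply ins_sorted; auto. Qed.

Lemma SS_nth l i k d : StronglySorted Rlt l -> (i < k)%nat -> (k < length l)%nat -> nth i l d < nth k l d.
Proof.
  revert i k. induction l as [|y l IH]; simpl; intros i k H Hik Hk; [lia|].
  inversion H; subst. destruct k; [lia|]. destruct i.
  - rewrite Forall_forall in H3. apply H3. apply nth_In; lia.
  - apply IH; auto; lia.
Qed.

Lemma assoc_exists h : PCB h -> exists P, assoc_partition h P.
Proof.
  intros Hh. destruct (good_exists h Hh) as [C [HC HG]].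
  set (P := rsort C). exists P.
  assert (HS : StronglySorted Rlt P) by apply rsort_sorted.
  assert (HI : forall z, In z P <-> In z C) by apply rsort_In.
  assert (HX : forall j, (j < length P)%nat -> X (alpha P j)).
  { intros j Hj. apply HC, HI, nth_In; auto. }
  assert (H0 : In 0 P) by (apply HI, HC).
  assert (Hlen : (0 < length P)%nat) by (destruct P; simpl in *; [contradiction|lia]).
  assert (Hb : forall j, (j < length P)%nat -> alpha P j < bnd P j).
  { intros j Hj. destruct (Nat.lt_ge_cases (S j) (length P)) as [Hl|Hl].
    - unfold bnd. rewrite (nth_indep P 1 0) by auto. apply SS_nth; auto.
    - unfold bnd. rewrite nth_overflow by lia. apply HX; auto. }
  split; auto. split; [|split; auto].
  - destruct (In_nth _ _ 0 H0) as [k [Hk Ek]].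
    destruct k as [|k]; auto. pose proof (SS_nth P 0 (S k) 0 HS ltac:(lia) Hk).
    rewrite Ek in H. pose proof (HX 0%nat Hlen). unfold alpha, X in *. lra.
  - intros j Hj x Hx.
    assert (Hx1 : 0 < x < 1).
    { pose proof (HX j Hj) as [A _].
      destruct (Nat.lt_ge_cases (S j) (length P)) as [Hl|Hl].
      - unfold bnd in Hx. rewrite (nth_indep P 1 0) in Hx by auto.
        pose proof (HX (S j) Hl) as [_ B]. unfold alpha in *. split; lra.
      - unfold bnd in Hx. rewrite nth_overflow in Hx by lia. split; lra. }
    apply HG; auto. intro HxC. apply HI in HxC.
    destruct (In_nth _ _ 0 HxC) as [k [Hk Ek]].
    destruct (Nat.le_gt_cases k j) as [Hl|Hl].
    + destruct (Nat.eq_dec k j) as [->|Hne].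
      * unfold alpha in Hx. lra.
      * pose proof (SS_nth P k j 0 HS ltac:(lia) Hj). unfold alpha in Hx. lra.
    + unfold bnd in Hx. rewrite (nth_indep P 1 0) in Hx by lia.
      destruct (Nat.eq_dec k (S j)) as [->|Hne]; [lra|].
      pose proof (SS_nth P (S j) k 0 HS ltac:(lia) Hk). lra.
Qed.

Lemma least_nat (Q : nat -> Prop) : (exists n, Q n) -> exists n, Q n /\ forall m, Q m -> (n <= m)%nat.
Proof.
  intros [n Hn]. revert Hn. induction n as [n IH] using (well_founded_induction Wf_nat.lt_wf). intros Hn.
  destruct (classic (exists m, Q m /\ (m < n)%nat)) as [[m [Hm Hmn]]|Hno].
  - apply (IH m Hmn Hm).
  - exists n. split; auto. intros m Hm. destruct (Nat.le_gt_cases n m); auto.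
    exfalso; apply Hno; exists m; auto.
Qed.

Lemma eps_iota h : PCB h -> eps h = iota h.
Proof.
  intros Hh.
  destruct (least_nat (fun n => exists P, assoc_partition h P /\ length P = n)) as [n [[Pm [HPm Ln]] Hmin]].
  { destruct (assoc_exists h Hh) as [P HP]. exists (length P), P; auto. }
  assert (Mm : min_assoc_partition h Pm).
  { split; auto. intros P' HP'. rewrite Ln. apply Hmin. exists P'; auto. }
  unfold eps.
  destruct (epsilon_spec (inhabits false) (fun b => exists P, min_assoc_partition h P /\ eps_hP h P b))
    as [P' [[HP' _] He]].
  - exists (E h Pm), Pm. split; auto. apply eps_hP_iff; auto.
  - apply eps_hP_iff in He; auto. rewrite He. destruct (assoc_cutset h P' HP').
    symmetry; apply iota_spec; auto.
Qed.

Notation cmp := Defs.comp.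

Lemma eps_comp g h : PCB g -> PCB h -> PCB (cmp g h) -> eps (cmp g h) = xorb (eps g) (eps h).
Proof.
  intros Hg Hh Hgh. rewrite (eps_iota _ Hgh), (eps_iota _ Hg), (eps_iota _ Hh). exact (iota_comp g h Hg Hh Hgh).
Qed.

Lemma away l x : ~ In x l -> exists d, 0 < d /\ forall y, Rabs (y - x) < d -> ~ In y l.
Proof.
  induction l as [|p l IH]; intros Hn.
  - exists 1. split; [lra|]. intros y _ [].
  - assert (Hxp : x <> p) by (intro; apply Hn; left; auto).
    destruct IH as [d [Hd Hy]]; [intro; apply Hn; right; auto|].
    exists (Rmin d (Rabs (x - p))). split.
    + apply Rmin_pos; auto. apply Rabs_pos_lt. lra.
    + intros y Hyx [Ey|Hyl].
      * subst y. pose proof (Rmin_r d (Rabs (x - p))). rewrite <- Rabs_Ropp in Hyx.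
        replace (- (p - x)) with (x - p) in Hyx by ring. lra.
      * apply (Hy y); auto. pose proof (Rmin_l d (Rabs (x - p))). lra.
Qed.

Lemma contX_fix f l x : (forall y, ~ In y l -> f y = y) -> ~ In x l -> contX_at f x.
Proof.
  intros Hf Hx eps He. destruct (away l x Hx) as [d [Hd Hy]].
  exists (Rmin d eps). split; [apply Rmin_pos; auto|].
  intros y _ Hyx. pose proof (Rmin_l d eps). pose proof (Rmin_r d eps).
  rewrite (Hf y), (Hf x); auto; [lra|]. apply Hy. lra.
Qed.

Lemma swap_X a b x : X a -> X b -> X x -> X (swap a b x).
Proof. intros. unfold swap. destruct (Req_dec_T x a), (Req_dec_T x b); auto. Qed.

Lemma PCB_swap a b : X a -> X b -> PCB (swap a b).
Proof.
  intros Ha Hb. split; [|split; [|split; [|split]]].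
  - intros; apply swap_X; auto.
  - intros x y _ _ E. rewrite <- (swap_invol a b x), <- (swap_invol a b y), E; auto.
  - intros y Hy. exists (swap a b y). split; [apply swap_X; auto|apply swap_invol].
  - intros x Hx. apply swap_o; intro; subst; auto.
  - exists [a; b]. intros x _ Hn. apply (contX_fix _ [a; b]); auto.
    intros y Hy. apply swap_o; intro; subst; apply Hy; simpl; auto.
Qed.

Lemma Sfin_swap a b : X a -> X b -> Sfin (swap a b).
Proof.
  intros Ha Hb. split; [apply PCB_swap; auto|]. exists [a; b].
  intros y Hy. apply swap_o; intro; subst; apply Hy; simpl; auto.
Qed.

Lemma swap_comm a b : swap a b = swap b a.
Proof.
  apply functional_extensionality; intros x. unfold swap.
  destruct (Req_dec_T x a), (Req_dec_T x b); subst; auto.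
Qed.

Lemma swap_swap a b : cmp (swap a b) (swap a b) = idf.
Proof. apply functional_extensionality; intros x. apply swap_invol. Qed.

Section Rho.
Variables a b c : R.
Hypothesis Hab : a <> b.
Hypothesis Hbc : b <> c.
Hypothesis Hac : a <> c.
Definition rho := cmp (swap a b) (swap b c).
Lemma rho_a : rho a = b.
Proof. unfold rho, Defs.comp. rewrite (swap_o b c a) by auto. apply swap_a. Qed.
Lemma rho_b : rho b = c.
Proof. unfold rho, Defs.comp. rewrite swap_a. apply swap_o; auto. Qed.
Lemma rho_c : rho c = a.
Proof. unfold rho, Defs.comp. rewrite swap_c. apply swap_c. Qed.
Lemma rho_o x : x <> a -> x <> b -> x <> c -> rho x = x.
Proof. intros. unfold rho, Defs.comp. rewrite (swap_o b c x), (swap_o a b x); auto. Qed.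
Lemma rho_order3 : order3 rho.
Proof.
  split.
  - apply functional_extensionality; intros x. change (rho (rho (rho x)) = x).
    destruct (Req_dec x a) as [->|Ha]; [rewrite rho_a, rho_b, rho_c; auto|].
    destruct (Req_dec x b) as [->|Hb]; [rewrite rho_b, rho_c, rho_a; auto|].
    destruct (Req_dec x c) as [->|Hc]; [rewrite rho_c, rho_a, rho_b; auto|].
    rewrite (rho_o x), (rho_o x), (rho_o x); auto.
  - intro E. pose proof rho_a. rewrite E in H. unfold idf in H. auto.
Qed.
Lemma rho4 : cmp (cmp rho rho) (cmp rho rho) = rho.
Proof.
  destruct rho_order3 as [E _].
  change (cmp (cmp rho rho) (cmp rho rho)) with (cmp rho (cmp rho (cmp rho rho))).
  rewrite E. reflexivity.
Qed.
End Rho.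

Lemma inv_unique f f1 f2 : inv_pair f f1 -> inv_pair f f2 -> f1 = f2.
Proof.
  intros H1 H2. apply functional_extensionality; intros x.
  destruct (H2 x) as [A _]. rewrite <- A at 1. destruct (H1 (f2 x)) as [_ B]. auto.
Qed.

Lemma inv_pair_sym f g : inv_pair f g -> inv_pair g f.
Proof. intros H x. destruct (H x); auto. Qed.

Lemma cmp_inv_l f f' : inv_pair f f' -> cmp f' f = idf.
Proof. intros H; apply functional_extensionality; intros x; apply H. Qed.
Lemma cmp_inv_r f f' : inv_pair f f' -> cmp f f' = idf.
Proof. intros H; apply functional_extensionality; intros x; apply H. Qed.

Section Grp.
Variable Gh : (R -> R) -> Prop.
Hypothesis HG : is_subgroup Gh.

Lemma G_pcb f : Gh f -> PCB f. Proof. apply HG. Qed.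
Lemma G_id : Gh idf. Proof. apply HG. Qed.
Lemma G_comp f g : Gh f -> Gh g -> Gh (cmp f g). Proof. apply HG. Qed.
Lemma G_inv f : Gh f -> exists f', Gh f' /\ inv_pair f f'. Proof. apply HG. Qed.

Lemma G_inv_any f f' : Gh f -> inv_pair f f' -> Gh f'.
Proof.
  intros Hf Hp. destruct (G_inv f Hf) as [f'' [A B]].
  rewrite (inv_unique f f' f''); auto.
Qed.

Lemma eps_G f g : Gh f -> Gh g -> eps (cmp f g) = xorb (eps f) (eps g).
Proof. intros. apply eps_comp; apply G_pcb; auto. apply G_comp; auto. Qed.

Lemma eps_id : eps idf = false.
Proof.
  pose proof (eps_G idf idf G_id G_id). change (cmp idf idf) with idf in H.
  destruct (eps idf); simpl in *; auto.
Qed.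

Lemma eps_inv f f' : Gh f -> inv_pair f f' -> eps f' = eps f.
Proof.
  intros Hf Hp. pose proof (G_inv_any f f' Hf Hp).
  pose proof (eps_G f f' Hf H). rewrite cmp_inv_r in H0 by auto. rewrite eps_id in H0.
  destruct (eps f), (eps f'); simpl in *; congruence.
Qed.

Definition Ker (f : R -> R) : Prop := Gh f /\ eps f = false.

Lemma Ker_subgroup : is_subgroup Ker.
Proof.
  split; [|split; [|split]].
  - intros f [A _]; apply G_pcb; auto.
  - split; [apply G_id|apply eps_id].
  - intros f g [A B] [C D]. split; [apply G_comp; auto|]. rewrite eps_G, B, D; auto.
  - intros f [A B]. destruct (G_inv f A) as [f' [C D]]. exists f'. split; auto.
    split; auto. rewrite (eps_inv f f'); auto.
Qed.

Section Gen.
Variable S : (R -> R) -> Prop.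
Hypothesis HS : forall f, S f -> Gh f.

Lemma gen_G f : generated S f -> Gh f.
Proof. intros H. apply H; auto. Qed.

Lemma gen_S f : S f -> generated S f.
Proof. intros Hf K HK HSK. auto. Qed.

Lemma gen_subgroup : is_subgroup (generated S).
Proof.
  split; [|split; [|split]].
  - intros f Hf. apply G_pcb, gen_G; auto.
  - intros K HK _. apply HK.
  - intros f g Hf Hg K HK HSK. apply HK; [apply Hf|apply Hg]; auto.
  - intros f Hf. destruct (G_inv f (gen_G f Hf)) as [f' [A B]].
    exists f'. split; auto. intros K HK HSK.
    destruct HK as (K1 & K2 & K3 & K4). destruct (K4 f (Hf K (conj K1 (conj K2 (conj K3 K4))) HSK)) as [f'' [C D]].
    rewrite (inv_unique f f' f''); auto.
Qed.

Hypothesis Sconj : forall g g' k, Gh g -> inv_pair g g' -> S k -> S (cmp g (cmp k g')).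

Lemma gen_normal g g' k : Gh g -> inv_pair g g' -> generated S k -> generated S (cmp g (cmp k g')).
Proof.
  intros Hg Hp Hk.
  set (Kg := fun k => Gh k /\ generated S (cmp g (cmp k g'))).
  assert (Hg' : Gh g') by (apply (G_inv_any g); auto).
  assert (HK : is_subgroup Kg).
  { split; [|split; [|split]].
    - intros f [A _]; apply G_pcb; auto.
    - split; [apply G_id|]. change (cmp g (cmp idf g')) with (cmp g g').
      rewrite cmp_inv_r by auto. apply gen_subgroup.
    - intros f1 f2 [A1 B1] [A2 B2]. split; [apply G_comp; auto|].
      assert (cmp g (cmp (cmp f1 f2) g') = cmp (cmp g (cmp f1 g')) (cmp g (cmp f2 g'))).
      { apply functional_extensionality; intros x. unfold Defs.comp.
        destruct (Hp (f2 (g' x))) as [_ E]. rewrite E. auto. }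
      rewrite H. apply gen_subgroup; auto.
    - intros f [A B]. destruct (G_inv f A) as [f' [C D]]. exists f'. split; auto.
      split; auto.
      destruct (proj2 (proj2 (proj2 gen_subgroup)) _ B) as [u [U1 U2]].
      assert (u = cmp g (cmp f' g')).
      { apply (inv_unique (cmp g (cmp f g'))); auto.
        intros x. unfold Defs.comp. split.
        - destruct (Hp (f' (g' x))) as [_ E]. rewrite E. destruct (D (g' x)) as [E2 _]. rewrite E2. apply Hp.
        - destruct (Hp (f (g' x))) as [_ E]. rewrite E. destruct (D (g' x)) as [_ E2]. rewrite E2. apply Hp. }
      subst u; auto. }
  apply (Hk Kg HK). intros f Hf. split; [apply HS; auto|]. apply gen_S, Sconj; auto.
Qed.

End Gen.
End Grp.

Lemma eps_swap a b : X a -> X b -> a <> b -> eps (swap a b) = true.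
Proof.
  intros Ha Hb Hab. pose proof (PCB_swap a b Ha Hb) as Hp.
  destruct (add_points_gen [a; b] [0] cutset0) as [C [HC FC]].
  { intros x [<-|[<-|[]]]; auto. }
  assert (HaC : In a C) by (apply FC; right; simpl; auto).
  assert (HbC : In b C) by (apply FC; right; simpl; auto).
  assert (HG : good (swap a b) C).
  { intros x Hx Hn. apply contX_cont; auto. apply (contX_fix _ [a; b]).
    - intros y Hy. apply swap_o; intro; subst; apply Hy; simpl; auto.
    - intros [->|[->|[]]]; auto. }
  rewrite eps_iota by auto. rewrite (iota_spec _ C Hp HC HG).
  pose proof (cutset_lt1 C HC) as Hlt.
  assert (Hid : forall c x, In c C -> c < x < nxt C c -> swap a b x = x).
  { intros c x Hc Hx. apply swap_o; intro E; subst x;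
    [apply (nxt_noC C c a HaC); auto | apply (nxt_noC C c b HbC); auto]. }
  assert (Hcn : forall c, In c C -> c < nxt C c /\ 0 <= c).
  { intros c Hc. destruct (proj2 (proj2 HC) c Hc). split; auto. apply nxt_gt; auto. }
  unfold E.
  rewrite (xsum_ext C _ (fun _ => false)).
  2:{ intros c Hc. apply decb_false. intros D.
      destruct (Hcn c Hc) as [H1 H2].
      assert (swap a b (c + 2 * (nxt C c - c) / 3) < swap a b (c + (nxt C c - c) / 3)) by (apply D; lra).
      rewrite (Hid c), (Hid c) in H by (first [assumption | split; lra]). lra. }
  rewrite xsum_false. simpl.
  rewrite (Inv_ext (swap a b) (swap a b) (bt (swap a b) C) (fun x => swap a b (swap a b x)) C); auto.
  - apply Inv_swap_odd; auto. apply HC. intros x y _ _ E.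
    rewrite <- (swap_invol a b x), <- (swap_invol a b y), E; auto.
  - intros c Hc. rewrite swap_invol. unfold bt.
    destruct (Hcn c Hc) as [H1 H2].
    assert (Hn1 : nxt C c <= 1) by apply nxt_le1.
    apply beta_eq; auto.
    + intros x Hx. rewrite (Hid c) by auto. lra.
    + split.
      * intros y [x [Hx ->]]. rewrite (Hid c) by auto. lra.
      * intros m' Hm'. destruct (Rle_or_lt m' c) as [|Hlt']; auto. exfalso.
        set (x := (c + Rmin m' (nxt C c)) / 2).
        assert (c < Rmin m' (nxt C c)) by (apply Rmin_glb_lt; lra).
        pose proof (Rmin_l m' (nxt C c)). pose proof (Rmin_r m' (nxt C c)).
        assert (Hm : m' <= swap a b x) by (apply Hm'; exists x; split; auto; unfold x; split; lra).
        rewrite (Hid c) in Hm by (first [assumption | unfold x; split; lra]). unfold x in Hm. lra.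
Qed.

Section Main.
Variable Gh : (R -> R) -> Prop.
Hypothesis HG : is_subgroup Gh.
Hypothesis Hsf : forall f, Sfin f -> Gh f.

Lemma SF_id : Sfin idf.
Proof. split; [apply (G_pcb Gh HG), G_id; auto|]. exists []. auto. Qed.

Lemma SF_comp s1 s2 : Sfin s1 -> Sfin s2 -> Sfin (cmp s1 s2).
Proof.
  intros H1 H2. split; [apply (G_pcb Gh HG), G_comp; auto|].
  destruct H1 as [_ [l1 F1]], H2 as [_ [l2 F2]]. exists (l1 ++ l2).
  intros x Hx. unfold Defs.comp. rewrite F2, F1; auto; intro; apply Hx, in_or_app; auto.
Qed.

Lemma SF_inv s s' : Sfin s -> inv_pair s s' -> Sfin s'.
Proof.
  intros Hs Hp. split; [apply (G_pcb Gh HG); apply (G_inv_any Gh HG s); auto|].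
  destruct Hs as [_ [l F]]. exists l. intros x Hx.
  rewrite <- (F x Hx) at 1. apply Hp.
Qed.

Lemma SF_conj g g' s : Gh g -> inv_pair g g' -> Sfin s -> Sfin (cmp g (cmp s g')).
Proof.
  intros Hg Hp Hs. split.
  - apply (G_pcb Gh HG). apply G_comp; auto. apply G_comp; auto. apply (G_inv_any Gh HG g); auto.
  - destruct Hs as [_ [l F]]. exists (map g l). intros x Hx. unfold Defs.comp.
    rewrite F; [apply Hp|]. intro Hin. apply Hx. rewrite <- (proj1 (Hp x)). apply in_map; auto.
Qed.

Definition valid (ts : list (R * R)) : Prop :=
  forall t, In t ts -> X (fst t) /\ X (snd t) /\ fst t <> snd t.
Definition tprod (ts : list (R * R)) : R -> R :=
  fold_right (fun t acc => cmp (swap (fst t) (snd t)) acc) idf ts.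

Lemma decomp : forall l s, Gh s -> (forall x, ~ In x l -> s x = x) ->
  exists ts, valid ts /\ s = tprod ts.
Proof.
  induction l as [|a l IH]; intros s Hs Hf.
  - exists []. split; [intros t []|]. apply functional_extensionality; intros x. apply Hf. auto.
  - pose proof (G_pcb Gh HG s Hs) as Ps.
    destruct (Req_dec (s a) a) as [Ea|Ea].
    + apply IH; auto. intros x Hx. destruct (Req_dec x a) as [->|Hxa]; auto.
      apply Hf. intros [E|E]; auto.
    + set (b := s a) in *.
      assert (HaX : X a) by (destruct (classic (X a)) as [|Hn]; auto; exfalso; apply Ea;
                             destruct Ps as (_ & _ & _ & P4 & _); apply P4; auto).
      assert (HbX : X b) by (apply pcb_X; auto).
      set (s' := cmp (swap a b) s).
      assert (Hs' : Gh s') by (apply G_comp; auto; apply Hsf, Sfin_swap; auto).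
      destruct (IH s' Hs') as [ts [V E]].
      { intros x Hx. unfold s', Defs.comp. destruct (Req_dec x a) as [->|Hxa].
        - fold b. apply swap_c.
        - rewrite Hf by (intros [E|E]; auto).
          apply swap_o; auto. intro Exb. apply Ea. fold b.
          assert (s x = x) by (apply Hf; intros [E|E]; auto).
          assert (a = x) by (apply (pcb_inj s); auto; [subst; auto | fold b; congruence]).
          congruence. }
      exists ((a, b) :: ts). split.
      * intros t [<-|Ht]; [simpl; auto|apply V; auto].
      * simpl. rewrite <- E. apply functional_extensionality; intros x. unfold s', Defs.comp.
        rewrite swap_invol. auto.
Qed.

Lemma prod_G ts : valid ts -> Gh (tprod ts) /\ eps (tprod ts) = Nat.odd (length ts).
Proof.
  induction ts as [|t ts IH]; intros V.
  - simpl. split; [apply (G_id Gh HG)|apply (eps_id Gh HG)].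
  - destruct (V t (or_introl eq_refl)) as (A & B & D).
    destruct IH as [IG IE]; [intros u Hu; apply V; right; auto|].
    assert (Gt : Gh (swap (fst t) (snd t))) by (apply Hsf, Sfin_swap; auto).
    simpl. split; [apply G_comp; auto|].
    rewrite (eps_G Gh HG); auto. rewrite IE, eps_swap; auto. rewrite Nat.odd_succ, <- Nat.negb_odd. auto.
Qed.

Variable H : (R -> R) -> Prop.
Hypothesis HH : is_subgroup H.
Hypothesis Hpair : forall a b c, X a -> X b -> X c -> a <> b -> b <> c -> a <> c ->
  H (cmp (swap a b) (swap b c)).

Lemma H_pair a b c d : X a -> X b -> X c -> X d -> a <> b -> c <> d -> H (cmp (swap a b) (swap c d)).
Proof.
  intros Ha Hb Hc Hd Hab Hcd.
  destruct HH as (H1 & H2 & H3 & H4).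
  destruct (Req_dec b c) as [<-|Hbc].
  - destruct (Req_dec a d) as [<-|Had].
    + rewrite (swap_comm b a), swap_swap. auto.
    + apply Hpair; auto.
  - destruct (Req_dec a c) as [<-|Hac].
    + destruct (Req_dec b d) as [<-|Hbd].
      * rewrite swap_swap; auto.
      * rewrite (swap_comm a b). apply Hpair; auto.
    + destruct (Req_dec b d) as [<-|Hbd].
      * rewrite (swap_comm c b). apply Hpair; auto.
      * destruct (Req_dec a d) as [<-|Had].
        -- rewrite (swap_comm a b), (swap_comm c a). apply Hpair; auto.
        -- assert (E : cmp (swap a b) (swap c d) =
                       cmp (cmp (swap a b) (swap b c)) (cmp (swap b c) (swap c d))).
           { change (cmp (swap a b) (swap c d) = cmp (swap a b) (cmp (cmp (swap b c) (swap b c)) (swap c d))).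
             rewrite swap_swap. reflexivity. }
           rewrite E. apply H3; apply Hpair; auto.
Qed.

Lemma even_prod : forall n ts, (length ts <= n)%nat -> valid ts -> Nat.odd (length ts) = false -> H (tprod ts).
Proof.
  induction n as [|n IH]; intros ts Hl V Ho.
  - destruct ts; [apply HH|simpl in Hl; lia].
  - destruct ts as [|t1 [|t2 ts]].
    + apply HH.
    + simpl in Ho. discriminate.
    + destruct (V t1 (or_introl eq_refl)) as (A1 & B1 & D1).
      destruct (V t2 (or_intror (or_introl eq_refl))) as (A2 & B2 & D2).
      change (H (cmp (cmp (swap (fst t1) (snd t1)) (swap (fst t2) (snd t2))) (tprod ts))).
      apply HH; [apply H_pair; auto|].
      apply IH.
      * simpl in Hl; lia.
      * intros u Hu; apply V; right; right; auto.
      * simpl in Ho. rewrite Nat.odd_succ, Nat.even_succ in Ho. auto.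
Qed.

Hypothesis Hsimple : forall N, normal_in N Gh -> (forall f, Sfin f -> N f) ->
     (forall f, N f <-> Sfin f) \/ (forall f, N f <-> Gh f).
Hypothesis HHG : forall f, H f -> Gh f.
Hypothesis HHn : forall g g' k, Gh g -> inv_pair g g' -> H k -> H (cmp g (cmp k g')).
Hypothesis HHout : exists k, H k /\ ~ Sfin k.
Hypothesis HHeps : forall f, H f -> eps f = false.

Definition NN (f : R -> R) : Prop := Gh f /\ exists k s, H k /\ Sfin s /\ f = cmp k s.

Lemma NN_normal : normal_in NN Gh.
Proof.
  split; [split; [|split; [|split]]|split].
  - intros f [A _]. apply (G_pcb Gh HG); auto.
  - split; [apply G_id; auto|]. exists idf, idf. split; [apply HH|]. split; [apply SF_id|]. reflexivity.
  - intros f1 f2 [A1 [k1 [s1 (K1 & S1 & E1)]]] [A2 [k2 [s2 (K2 & S2 & E2)]]].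
    split; [apply G_comp; auto|].
    destruct (proj2 (proj2 (proj2 HH)) k2 K2) as [k2' [K2' P2]].
    exists (cmp k1 k2), (cmp (cmp k2' (cmp s1 k2)) s2). split; [apply HH; auto|]. split.
    + apply SF_comp; auto. apply SF_conj; [apply (G_inv_any Gh HG k2); auto | apply inv_pair_sym; auto | auto].
    + subst. apply functional_extensionality; intros x. unfold Defs.comp.
      destruct (P2 (s1 (k2 (s2 x)))) as [E _]. rewrite E. auto.
  - intros f [A [k [s (K & S & E)]]].
    destruct (proj2 (proj2 (proj2 HH)) k K) as [k' [K' P]].
    destruct (G_inv Gh HG s (Hsf s S)) as [s' [S' Ps]].
    exists (cmp s' k'). split.
    + split; [apply G_comp; auto; apply HHG; auto|].
      exists k', (cmp k (cmp s' k')). split; auto. split.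
      * apply SF_conj; auto. apply SF_inv with s; auto.
      * apply functional_extensionality; intros x. unfold Defs.comp.
        destruct (P (s' (k' x))) as [_ E2]. rewrite E2. auto.
    + subst. intros x. unfold Defs.comp. split.
      * destruct (Ps (k' x)) as [E2 _]. rewrite E2. apply P.
      * destruct (P (s x)) as [_ E1]. rewrite E1. apply Ps.
  - intros f [A _]; auto.
  - intros g g' n Hg Hp [A [k [s (K & S & E)]]].
    assert (Hg' : Gh g') by (apply (G_inv_any Gh HG g); auto).
    split; [apply G_comp; auto; apply G_comp; auto|].
    exists (cmp g (cmp k g')), (cmp g (cmp s g')). split; [apply HHn; auto|]. split; [apply SF_conj; auto|].
    subst. apply functional_extensionality; intros x. unfold Defs.comp.
    destruct (Hp (s (g' x))) as [_ E]. rewrite E. auto.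
Qed.

Lemma main_abs f : H f <-> Gh f /\ eps f = false.
Proof.
  split; [intros Hf; split; auto|].
  intros [Gf Ef].
  assert (NS : forall f, Sfin f -> NN f).
  { intros s Hs. split; auto. exists idf, s. split; [apply HH|]. split; auto. }
  destruct (Hsimple NN NN_normal NS) as [Hc|Hc].
  - exfalso. destruct HHout as [k [Hk Hn]]. apply Hn, Hc. split; auto.
    exists k, idf. split; auto. split; [apply SF_id|]. reflexivity.
  - destruct (proj2 (Hc f) Gf) as [_ [k [s (K & S & ->)]]].
    assert (Gk : Gh k) by auto. assert (Gs : Gh s) by auto.
    rewrite (eps_G Gh HG k s Gk Gs), HHeps in Ef by auto. simpl in Ef.
    destruct S as [Ps [l Fl]].
    destruct (decomp l s Gs Fl) as [ts [V ->]].
    apply HH; auto. apply (even_prod (length ts)); auto.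
    destruct (prod_G ts V) as [_ E]. rewrite <- E. auto.
Qed.

End Main.

Theorem corollary4p4 (Gh : (R -> R) -> Prop) :
  is_subgroup Gh ->
  (forall f, Sfin f -> Gh f) ->
  (exists f, Gh f /\ ~ Sfin f) ->
  (forall N, normal_in N Gh -> (forall f, Sfin f -> N f) ->
     (forall f, N f <-> Sfin f) \/ (forall f, N f <-> Gh f)) ->
  (exists c, commutator_of Gh c /\ ~ Sfin c) ->
  (exists f, Gh f /\ ~ Sfin f /\ order3 f) ->
  forall f, (J3 Gh f <-> (Gh f /\ eps f = false)) /\ (D Gh f <-> J3 Gh f).
Proof.
  intros HG Hsf _ Hsimple [c0 [Hc0 Hc0n]] [f0 (Gf0 & Sf0 & Of0)] f.
  assert (Grho : forall a b c, X a -> X b -> X c -> Gh (cmp (swap a b) (swap b c))).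
  { intros a b c Ha Hb Hc. apply (G_comp Gh HG); apply Hsf, Sfin_swap; auto. }
  set (S3 := fun f => Gh f /\ order3 f).
  assert (HS3 : forall f, S3 f -> Gh f) by (intros g [A _]; auto).
  assert (S3conj : forall g g' k, Gh g -> inv_pair g g' -> S3 k -> S3 (cmp g (cmp k g'))).
  { intros g g' k Hg Hp [Hk [Ok Nk]].
    assert (Hg' : Gh g') by (apply (G_inv_any Gh HG g); auto).
    split; [apply (G_comp Gh HG); auto; apply (G_comp Gh HG); auto|]. split.
    - apply functional_extensionality; intros x. unfold Defs.comp, idf.
      pose proof (equal_f Ok (g' x)) as E. unfold Defs.comp, idf in E.
      destruct (Hp (k (g' x))) as [_ E1]. rewrite E1.
      destruct (Hp (k (k (g' x)))) as [_ E2]. rewrite E2. rewrite E. apply Hp.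
    - intro E. apply Nk. apply functional_extensionality; intros x.
      pose proof (equal_f E (g x)) as E1. unfold Defs.comp, idf in E1.
      destruct (Hp x) as [_ E2]. rewrite E2 in E1.
      rewrite <- (proj2 (Hp (k x))), E1. unfold idf. apply Hp. }
  assert (J3sub : is_subgroup (J3 Gh)) by (apply (gen_subgroup Gh HG S3 HS3)).
  assert (J3G : forall f, J3 Gh f -> Gh f) by (intros g Hg; apply (gen_G Gh HG S3 HS3); auto).
  assert (S3eps : forall f, S3 f -> eps f = false).
  { intros g [Hg [Og _]].
    pose proof (eps_id Gh HG) as E0. rewrite <- Og in E0.
    rewrite (eps_G Gh HG) in E0 by (auto; apply (G_comp Gh HG); auto).
    rewrite (eps_G Gh HG) in E0 by auto. destruct (eps g); auto. }
  assert (J3eps : forall f, J3 Gh f -> eps f = false).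
  { intros g Hg. apply (Hg (Ker Gh) (Ker_subgroup Gh HG)). intros u Hu. split; auto. }
  assert (EJ : forall f, J3 Gh f <-> Gh f /\ eps f = false).
  { apply (main_abs Gh HG Hsf (J3 Gh) J3sub).
    - intros a b c Ha Hb Hc Hab Hbc Hac. apply (gen_S S3). split; [apply Grho; auto|].
      apply rho_order3; auto.
    - auto.
    - auto.
    - intros g g' k Hg Hp Hk. apply (gen_normal Gh HG S3 HS3 S3conj); auto.
    - exists f0. split; auto. apply (gen_S S3). split; auto.
    - auto. }
  set (SC := commutator_of Gh).
  assert (HSC : forall f, SC f -> Gh f).
  { intros g (a & a' & k & k' & Ha & Hk & Pa & Pk & ->).
    assert (Gh a') by (apply (G_inv_any Gh HG a); auto).
    assert (Gh k') by (apply (G_inv_any Gh HG k); auto).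
    repeat (apply (G_comp Gh HG); auto). }
  assert (SCconj : forall g g' k, Gh g -> inv_pair g g' -> SC k -> SC (cmp g (cmp k g'))).
  { intros g g' u Hg Hp (a & a' & k & k' & Ha & Hk & Pa & Pk & ->).
    assert (Hg' : Gh g') by (apply (G_inv_any Gh HG g); auto).
    exists (cmp g (cmp a g')), (cmp g (cmp a' g')), (cmp g (cmp k g')), (cmp g (cmp k' g')).
    split; [repeat (apply (G_comp Gh HG); auto)|].
    split; [repeat (apply (G_comp Gh HG); auto)|].
    split; [|split].
    - intros x. unfold Defs.comp. split.
      + destruct (Hp (a' (g' x))) as [_ E]. rewrite E. destruct (Pa (g' x)) as [E2 _]. rewrite E2. apply Hp.
      + destruct (Hp (a (g' x))) as [_ E]. rewrite E. destruct (Pa (g' x)) as [_ E2]. rewrite E2. apply Hp.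
    - intros x. unfold Defs.comp. split.
      + destruct (Hp (k' (g' x))) as [_ E]. rewrite E. destruct (Pk (g' x)) as [E2 _]. rewrite E2. apply Hp.
      + destruct (Hp (k (g' x))) as [_ E]. rewrite E. destruct (Pk (g' x)) as [_ E2]. rewrite E2. apply Hp.
    - apply functional_extensionality; intros x. unfold Defs.comp.
      destruct (Hp (k' (g' x))) as [_ E1]. rewrite E1.
      destruct (Hp (a' (k' (g' x)))) as [_ E2]. rewrite E2.
      destruct (Hp (k (a' (k' (g' x))))) as [_ E3]. rewrite E3. auto. }
  assert (Dsub : is_subgroup (D Gh)) by (apply (gen_subgroup Gh HG SC HSC)).
  assert (Deps : forall f, D Gh f -> eps f = false).
  { intros g Hg. apply (Hg (Ker Gh) (Ker_subgroup Gh HG)).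
    intros u Hu. split; auto.
    destruct Hu as (a & a' & k & k' & Ha & Hk & Pa & Pk & ->).
    assert (Ga' : Gh a') by (apply (G_inv_any Gh HG a); auto).
    assert (Gk' : Gh k') by (apply (G_inv_any Gh HG k); auto).
    rewrite (eps_G Gh HG) by (auto; repeat (apply (G_comp Gh HG); auto)).
    rewrite (eps_G Gh HG) by (auto; repeat (apply (G_comp Gh HG); auto)).
    rewrite (eps_G Gh HG) by auto.
    rewrite (eps_inv Gh HG a a'), (eps_inv Gh HG k k') by auto.
    destruct (eps a), (eps k); auto. }
  assert (ED : forall f, D Gh f <-> Gh f /\ eps f = false).
  { apply (main_abs Gh HG Hsf (D Gh) Dsub).
    - intros a b c Ha Hb Hc Hab Hbc Hac.
      assert (Hcm : D Gh (cmp (rho a b c) (rho a b c))).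
      { apply (gen_S SC). exists (swap a b), (swap a b), (swap b c), (swap b c).
        split; [apply Hsf, Sfin_swap; auto|]. split; [apply Hsf, Sfin_swap; auto|].
        split; [intros x; split; apply swap_invol|]. split; [intros x; split; apply swap_invol|].
        reflexivity. }
      change (D Gh (rho a b c)). rewrite <- (rho4 a b c) by auto.
      apply (proj1 (proj2 (proj2 Dsub))); auto.
    - auto.
    - intros g Hg; apply (gen_G Gh HG SC HSC); auto.
    - intros g g' k Hg Hp Hk. apply (gen_normal Gh HG SC HSC SCconj); auto.
    - exists c0. split; auto. apply (gen_S SC); auto.
    - auto. }
  split; auto. rewrite ED, EJ. tauto.
Qed.
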